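(* Let $Z\subset\mathbb{R}^5$ be the set of real solutions $(x_1,\dots,x_5)$ of the system $$1+x_1=x_3x_4,\quad 1+x_2=x_4x_5,\quad 1+x_3=x_5x_1,\quad 1+x_4=x_1x_2,\quad 1+x_5=x_2x_3.$$ Then $Z$ is a smooth surface in $\mathbb{R}^5$. Its closure $S\subset\mathbb{R}\mathbb{P}^5$ (where $\mathbb{R}^5$ is regarded as a standard affine chart of $\mathbb{R}\mathbb{P}^5$) is a smooth compact surface, and its complexification $S_{\mathbb{C}}\subset\mathbb{C}\mathbb{P}^5$ is a smooth compact complex surface.
   Context: The complexification $S_{\mathbb{C}}$ means the closure in $\mathbb{C}\mathbb{P}^5$ of the set of complex solutions $(x_1,\dots,x_5)\in\mathbb{C}^5$ of the same system, with $\mathbb{C}^5$ regarded as the standard affine chart of $\mathbb{C}\mathbb{P}^5$. *)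

(* Defs.v *)
From HB Require Import structures.
From mathcomp Require Import all_boot all_order all_algebra.
From mathcomp Require Import all_classical all_reals all_analysis.
From mathcomp Require Import complex.
Import numFieldNormedType.Exports.
Set Implicit Arguments. Unset Strict Implicit. Unset Printing Implicit Defensive.
Import Order.TTheory GRing.Theory Num.Theory.
Local Open Scope ring_scope.
Local Open Scope classical_set_scope.

(* Derivatives
   are K-derivatives, so for K = complex R "smooth" means holomorphic. *)

(* j-th coordinate (0-based) of x : K^n.+1 *)
Definition coord {K : numFieldType} {n : nat} (x : 'rV[K]_n.+1) (j : nat) : K :=
  x ord0 (inord j).

Definition dirD {K : numFieldType} {n m : nat} (vs : seq 'rV[K]_n)
  (f : 'rV[K]_n -> 'rV[K]_m) : 'rV[K]_n -> 'rV[K]_m :=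
  foldr (fun v g => fun x => 'D_v g x) f vs.

Definition smooth_on {K : numFieldType} {n m : nat} (U : set 'rV[K]_n)
  (f : 'rV[K]_n -> 'rV[K]_m) : Prop :=
  forall (vs : seq 'rV[K]_n) (x : 'rV[K]_n), U x ->
    (forall v, derivable (dirD vs f) x v) /\ {for x, continuous (dirD vs f)}.

Definition jacobian {K : numFieldType} {n m : nat} (F : 'rV[K]_n -> 'rV[K]_m)
  (p : 'rV[K]_n) : 'M[K]_(n, m) :=
  \matrix_(i < n) ('D_(delta_mx 0 i) F p : 'rV[K]_m).

Definition submanifold {K : numFieldType} {n : nat} (k : nat)
  (M : set 'rV[K]_n) : Prop :=
  forall p, M p ->
    exists (U : set 'rV[K]_n) (F : 'rV[K]_n -> 'rV[K]_(n - k)),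
      [/\ open U, U p, smooth_on U F,
          (forall x, U x -> (M x <-> F x = 0)) &
          \rank (jacobian F p) = (n - k)%N].

Definition sys {K : numFieldType} (x : 'rV[K]_5) : Prop :=
  [/\ 1 + coord x 0 = coord x 2 * coord x 3,
      1 + coord x 1 = coord x 3 * coord x 4,
      1 + coord x 2 = coord x 4 * coord x 0,
      1 + coord x 3 = coord x 0 * coord x 1 &
      1 + coord x 4 = coord x 1 * coord x 2].

Definition solset (K : numFieldType) : set 'rV[K]_5 := [set x | sys x].
Arguments solset K : clear implicits.

(* Projective space KP^5 = (K^6 \ 0)/K^*.  The affine chart used for K^5 itself is i = 0. *)
Definition chart {K : numFieldType} (i : 'I_6) (w : 'rV[K]_5) : 'rV[K]_6 :=
  \row_j (if unlift i j is Some j' then w ord0 j' else 1).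

Definition cone {K : numFieldType} (A : set 'rV[K]_5) : set 'rV[K]_6 :=
  [set v | exists t z, [/\ t != 0, A z & v = t *: chart ord0 z]].

(* Closure of A in KP^5, represented by its (scaling-invariant) preimage in
   K^6 \ 0: since K^6 \ 0 -> KP^5 is open, the preimage of the closure is the
   closure (in K^6 \ 0) of the preimage. *)
Definition proj_closure {K : numFieldType} (A : set 'rV[K]_5) : set 'rV[K]_6 :=
  [set v | v != 0 /\ closure (cone A) v].

Definition in_chart {K : numFieldType} (i : 'I_6) (S : set 'rV[K]_6) : set 'rV[K]_5 :=
  [set w | S (chart i w)].

(* A subset of KP^5 (given by its preimage S in K^6 \ 0) is a smooth
   (complex, if K = C) submanifold of dimension k iff it is so in each of the
   six standard affine charts (which form the smooth atlas of KP^5). *)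
Definition proj_submanifold {K : numFieldType} (k : nat) (S : set 'rV[K]_6) : Prop :=
  forall i : 'I_6, submanifold k (in_chart i S).

(* A subset of KP^5 (given by its preimage S) is compact iff its intersection
   with the unit sphere of K^6 (which maps onto KP^5) is compact. *)
Definition proj_compact {K : numFieldType} (S : set 'rV[K]_6) : Prop :=
  compact [set v | S v /\ `|v| = 1].

(* Main.v *)
Require Import Defs.
From HB Require Import structures.
From mathcomp Require Import all_boot all_order all_algebra.
From mathcomp Require Import all_classical all_reals all_analysis.
From mathcomp Require Import complex.
Import numFieldNormedType.Exports.
Import Order.TTheory GRing.Theory Num.Theory.
Local Open Scope ring_scope.
Local Open Scope classical_set_scope.
Set Implicit Arguments. Unset Strict Implicit. Unset Printing Implicit Defensive.
From mathcomp Require Import ring.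
Section PE.
Variable K : numFieldType.
Variable n : nat.

Inductive pe := PC of K | PX of 'I_n | PAdd of pe & pe | PMul of pe & pe | PNeg of pe.

Fixpoint ev (e : pe) (x : 'rV[K]_n) : K :=
  match e with
  | PC c => c
  | PX i => x ord0 i
  | PAdd a b => ev a x + ev b x
  | PMul a b => ev a x * ev b x
  | PNeg a => - ev a x
  end.

Fixpoint dv (e : pe) (v : 'rV[K]_n) : pe :=
  match e with
  | PC c => PC 0
  | PX i => PC (v ord0 i)
  | PAdd a b => PAdd (dv a v) (dv b v)
  | PMul a b => PAdd (PMul a (dv b v)) (PMul b (dv a v))
  | PNeg a => PNeg (dv a v)
  end.

Lemma ev_diff e x : differentiable (ev e) x.
Proof.
elim: e => [c|i|a IHa b IHb|a IHa b IHb|a IHa] /=.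
- exact: differentiable_cst.
- exact: differentiable_coord.
- exact: (differentiableD IHa IHb).
- exact: (differentiableM IHa IHb).
- exact: (differentiableN IHa).
Qed.

Lemma ev_cont e : continuous (ev e).
Proof. by move=> x; apply: differentiable_continuous; apply: ev_diff. Qed.

Lemma ev_is_derive e x v : is_derive x v (ev e) (ev (dv e v) x).
Proof.
elim: e => [c|i|a IHa b IHb|a IHa b IHb|a IHa] /=.
- exact: is_derive_cst.
- have C : (fun h : K => h^-1 *: (((fun y : 'rV[K]_n => y ord0 i) \o shift x) (h *: v) - x ord0 i)) @ 0^' --> v ord0 i.
    apply: cvg_near_cst. near=> h.
    have h0 : h != 0 by near: h; exact: nbhs_dnbhs_neq.
    rewrite /= !mxE /GRing.scale /= addrK mulrA mulVf // mul1r //.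
  apply: DeriveDef; first by apply/cvg_ex; exists (v ord0 i).
  exact: cvg_lim C.
- exact: (is_deriveD IHa IHb).
- have H := is_deriveM IHa IHb.
  apply: (is_derive_eq H).
  by rewrite /GRing.scale /= mulrC [X in _ + X]mulrC.
- exact: (is_deriveN IHa).
Unshelve. all: by end_near. Qed.


Lemma is_deriveZc (f : 'rV[K]_n -> K) m (w : 'rV[K]_m) x v df :
  is_derive x v f df -> is_derive x v (fun y => f y *: w) (df *: w).
Proof.
move=> [d1 d2].
have C : (fun h : K => h^-1 *: (((fun y => f y *: w) \o shift x) (h *: v) - f x *: w)) @ 0^' --> df *: w.
  have -> : (fun h : K => h^-1 *: (((fun y => f y *: w) \o shift x) (h *: v) - f x *: w))
     = (fun h : K => (h^-1 *: ((f \o shift x) (h *: v) - f x)) *: w).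
    by apply: funext => h /=; rewrite -scalerBl scalerA.
  apply: cvgZr_tmp. rewrite -d2. exact: d1.
apply: DeriveDef; first by apply/cvg_ex; exists (df *: w).
exact: cvg_lim C.
Qed.

Definition mk m (es : 'I_m -> pe) (x : 'rV[K]_n) : 'rV[K]_m := \row_j ev (es j) x.
Definition dvs m (es : 'I_m -> pe) v := fun j => dv (es j) v.

Lemma mkE m (es : 'I_m -> pe) : mk es = fun x => \sum_(j < m) ev (es j) x *: delta_mx ord0 j.
Proof.
apply: funext => x; apply/rowP => k; rewrite /mk mxE summxE.
rewrite (bigD1 k) //= big1 ?addr0 => [|j jk]; rewrite !mxE ?eqxx /= ?mulr1 //.
by rewrite eq_sym (negbTE jk) mulr0.
Qed.

Lemma mk_is_derive m (es : 'I_m -> pe) x v : is_derive x v (mk es) (mk (dvs es v) x).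
Proof.
rewrite mkE.
have -> : mk (dvs es v) x = \sum_(j < m) ev (dvs es v j) x *: delta_mx ord0 j by rewrite mkE.
have -> : (fun x => \sum_(j < m) ev (es j) x *: (delta_mx ord0 j : 'rV[K]_m)) = \sum_(j < m) (fun x => ev (es j) x *: (delta_mx ord0 j : 'rV[K]_m)).
  by apply: funext => y; rewrite fct_sumE.
apply: is_derive_sum => j; apply: is_deriveZc; exact: ev_is_derive.
Qed.

Lemma mk_diff m (es : 'I_m -> pe) x : differentiable (mk es) x.
Proof.
rewrite mkE.
have -> : (fun x => \sum_(j < m) ev (es j) x *: (delta_mx ord0 j : 'rV[K]_m)) = \sum_(j < m) (fun x => ev (es j) x *: (delta_mx ord0 j : 'rV[K]_m)).
  by apply: funext => y; rewrite fct_sumE.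
apply: differentiable_sum => j. apply: differentiableZl. exact: ev_diff.
Qed.

Lemma D_mk m (es : 'I_m -> pe) v : (fun x => 'D_v (mk es) x) = mk (dvs es v).
Proof. by apply: funext => x; have [_ ->] := mk_is_derive es x v. Qed.

Fixpoint dvss m (vs : seq 'rV[K]_n) (es : 'I_m -> pe) : 'I_m -> pe :=
  match vs with [::] => es | v :: vs => dvs (dvss vs es) v end.

Lemma dirD_mk m (vs : seq 'rV[K]_n) (es : 'I_m -> pe) : dirD vs (mk es) = mk (dvss vs es).
Proof. elim: vs => [|v vs IH] //=. by rewrite IH D_mk. Qed.

Lemma smooth_mk m U (es : 'I_m -> pe) : smooth_on U (mk es).
Proof.
move=> vs x _; rewrite dirD_mk; split.
  by move=> v; apply: diff_derivable; apply: mk_diff.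
exact: differentiable_continuous (mk_diff _ _).
Qed.

Lemma jacobian_mk m (es : 'I_m -> pe) p :
  Defs.jacobian (mk es) p = \matrix_(i < n, j < m) ev (dv (es j) (delta_mx 0 i)) p.
Proof.
apply/matrixP => i j; rewrite !mxE.
by have [_ ->] := mk_is_derive es p (delta_mx 0 i); rewrite /mk mxE.
Qed.

End PE.
Section Topo.
Variable K : numFieldType.

Lemma closed0 (m : nat) : closed [set (0 : 'rV[K]_m)].
Proof. apply: accessible_closed_set1; apply: hausdorff_accessible; exact: norm_hausdorff. Qed.

Lemma closed0K : closed [set (0 : K)].
Proof. apply: accessible_closed_set1; apply: hausdorff_accessible; exact: norm_hausdorff. Qed.

Lemma closed_mk0 n m (es : 'I_m -> pe K n) : closed [set x | mk es x = 0].
Proof.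
have -> : [set x | mk es x = 0] = mk es @^-1` [set 0] by [].
apply: preimage_closed; last exact: closed0.
move=> x _; exact: differentiable_continuous (mk_diff _ _).
Qed.

Lemma open_nz n (e : pe K n) : open [set x | ev e x != 0].
Proof.
have -> : [set x | ev e x != 0] = ~` (ev e @^-1` [set 0]).
  by apply/seteqP; split => x /=; move/eqP.
apply: closed_openC; apply: preimage_closed; last exact: closed0K.
move=> x _; exact: ev_cont.
Qed.
End Topo.
Notation o3 k := (@Ordinal 3 k isT).
Notation o5 k := (@Ordinal 5 k isT).
Notation o6 k := (@Ordinal 6 k isT).

Lemma rank3 (K : numFieldType) (M : 'M[K]_(5,3)) (B : 'M[K]_(3,5)) : B *m M = 1%:M -> \rank M = 3.
Proof. move=> H; have : row_full M by apply/row_fullP; exists B. by move/eqP. Qed.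

Section Curve.
Variable K : numFieldType.
Definition r1 (u : K) : 'rV[K]_1 := u *: const_mx 1.

Lemma curve_closure (A : set 'rV[K]_6) (gs : 'I_6 -> pe K 1) :
  (forall u : K, u != 0 -> closure A (mk gs (r1 u))) -> closure A (mk gs (r1 0)).
Proof.
move=> H.
have cont : continuous (fun u => mk gs (r1 u)).
  move=> u; apply: continuous_comp; first exact: scalel_continuous.
  exact: differentiable_continuous (mk_diff _ _).
apply: (@closed_cvg _ _ (0 : K)^' _ (fun u => mk gs (r1 u))); first exact: closed_closure.
  near=> u; apply: H; near: u; exact: nbhs_dnbhs_neq.
exact: (continuous_withinNx _ _).1 (cont 0).
Unshelve. all: by end_near.
Qed.
End Curve.

Lemma mk_eq0 (K : numFieldType) n m (es : 'I_m -> pe K n) x : mk es x = 0 <-> forall k, ev (es k) x = 0.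
Proof.
split => [/rowP h k|h]; first by have := h k; rewrite !mxE.
by apply/rowP => k; rewrite !mxE.
Qed.

Lemma mk3E (K : numFieldType) n (es : 'I_3 -> pe K n) x :
  mk es x = 0 <-> [/\ ev (es (o3 0)) x = 0, ev (es (o3 1)) x = 0 & ev (es (o3 2)) x = 0].
Proof.
rewrite mk_eq0; split => [h|[h0 h1 h2] [[|[|[|//]]] Hk]]; first by split; apply: h.
- by rewrite (bool_irrelevance Hk (isT : 0 < 3)%N).
- by rewrite (bool_irrelevance Hk (isT : 1 < 3)%N).
- by rewrite (bool_irrelevance Hk (isT : 2 < 3)%N).
Qed.

Lemma comb1 (K : comRingType) (E E1 c1 : K) : E = c1 * E1 -> E1 = 0 -> E = 0.
Proof. by move=> -> ->; rewrite mulr0. Qed.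
Lemma comb2 (K : comRingType) (E E1 E2 c1 c2 : K) : E = c1 * E1 + c2 * E2 -> E1 = 0 -> E2 = 0 -> E = 0.
Proof. by move=> -> -> ->; rewrite !mulr0 addr0. Qed.
Lemma comb3 (K : comRingType) (E E1 E2 E3 c1 c2 c3 : K) :
  E = c1 * E1 + c2 * E2 + c3 * E3 -> E1 = 0 -> E2 = 0 -> E3 = 0 -> E = 0.
Proof. by move=> -> -> -> ->; rewrite !mulr0 !addr0. Qed.

Lemma chart_lift (K : numFieldType) (i k : 'I_6) (j : 'I_5) (w : 'rV[K]_5) : k = lift i j -> chart i w ord0 k = w ord0 j.
Proof. by move=> ->; rewrite /chart mxE liftK. Qed.
Lemma chart_at (K : numFieldType) i (w : 'rV[K]_5) : chart i w ord0 i = 1.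
Proof. by rewrite /chart mxE unlift_none. Qed.
Lemma chart_neq0 (K : numFieldType) i (w : 'rV[K]_5) : chart i w != 0.
Proof. by apply/eqP => /rowP /(_ i); rewrite chart_at mxE => /eqP; rewrite oner_eq0. Qed.
Section Main.
Variable K : numFieldType.
Definition qe : 'I_5 -> pe K 6 := fun l =>
  match val l with
  | 0 => (PAdd (PAdd (PMul (@PX K 6 (o6 0)) (@PX K 6 (o6 0))) (PMul (@PX K 6 (o6 0)) (@PX K 6 (o6 1)))) (PNeg (PMul (@PX K 6 (o6 3)) (@PX K 6 (o6 4)))))
  | 1 => (PAdd (PAdd (PMul (@PX K 6 (o6 0)) (@PX K 6 (o6 0))) (PMul (@PX K 6 (o6 0)) (@PX K 6 (o6 2)))) (PNeg (PMul (@PX K 6 (o6 4)) (@PX K 6 (o6 5)))))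
  | 2 => (PAdd (PAdd (PMul (@PX K 6 (o6 0)) (@PX K 6 (o6 0))) (PMul (@PX K 6 (o6 0)) (@PX K 6 (o6 3)))) (PNeg (PMul (@PX K 6 (o6 5)) (@PX K 6 (o6 1)))))
  | 3 => (PAdd (PAdd (PMul (@PX K 6 (o6 0)) (@PX K 6 (o6 0))) (PMul (@PX K 6 (o6 0)) (@PX K 6 (o6 4)))) (PNeg (PMul (@PX K 6 (o6 1)) (@PX K 6 (o6 2)))))
  | _ => (PAdd (PAdd (PMul (@PX K 6 (o6 0)) (@PX K 6 (o6 0))) (PMul (@PX K 6 (o6 0)) (@PX K 6 (o6 5)))) (PNeg (PMul (@PX K 6 (o6 2)) (@PX K 6 (o6 3)))))
  end.
Definition QV (v : 'rV[K]_6) : Prop := forall k : 'I_5, ev (qe k) v = 0.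
Definition se : 'I_5 -> pe K 5 := fun l =>
  match val l with
  | 0 => (PAdd (PAdd (@PC K 5 (1)) (@PX K 5 (o5 0))) (PNeg (PMul (@PX K 5 (o5 2)) (@PX K 5 (o5 3)))))
  | 1 => (PAdd (PAdd (@PC K 5 (1)) (@PX K 5 (o5 1))) (PNeg (PMul (@PX K 5 (o5 3)) (@PX K 5 (o5 4)))))
  | 2 => (PAdd (PAdd (@PC K 5 (1)) (@PX K 5 (o5 2))) (PNeg (PMul (@PX K 5 (o5 4)) (@PX K 5 (o5 0)))))
  | 3 => (PAdd (PAdd (@PC K 5 (1)) (@PX K 5 (o5 3))) (PNeg (PMul (@PX K 5 (o5 0)) (@PX K 5 (o5 1)))))
  | _ => (PAdd (PAdd (@PC K 5 (1)) (@PX K 5 (o5 4))) (PNeg (PMul (@PX K 5 (o5 1)) (@PX K 5 (o5 2)))))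
  end.

Lemma P5 (P : 'I_5 -> Prop) : P (o5 0) -> P (o5 1) -> P (o5 2) -> P (o5 3) -> P (o5 4) -> forall k, P k.
Proof.
move=> h0 h1 h2 h3 h4 [[|[|[|[|[|//]]]]] Hk].
- by rewrite (bool_irrelevance Hk (isT : 0 < 5)%N).
- by rewrite (bool_irrelevance Hk (isT : 1 < 5)%N).
- by rewrite (bool_irrelevance Hk (isT : 2 < 5)%N).
- by rewrite (bool_irrelevance Hk (isT : 3 < 5)%N).
- by rewrite (bool_irrelevance Hk (isT : 4 < 5)%N).
Qed.

Lemma P6 (P : 'I_6 -> Prop) : P (o6 0) -> P (o6 1) -> P (o6 2) -> P (o6 3) -> P (o6 4) -> P (o6 5) -> forall k, P k.
Proof.
move=> h0 h1 h2 h3 h4 h5 [[|[|[|[|[|[|//]]]]]] Hk].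
- by rewrite (bool_irrelevance Hk (isT : 0 < 6)%N).
- by rewrite (bool_irrelevance Hk (isT : 1 < 6)%N).
- by rewrite (bool_irrelevance Hk (isT : 2 < 6)%N).
- by rewrite (bool_irrelevance Hk (isT : 3 < 6)%N).
- by rewrite (bool_irrelevance Hk (isT : 4 < 6)%N).
- by rewrite (bool_irrelevance Hk (isT : 5 < 6)%N).
Qed.

Lemma QV_closed : closed [set v | QV v].
Proof.
have -> : [set v | QV v] = [set v | mk qe v = 0].
  by apply/seteqP; split => v /=; rewrite mk_eq0.
exact: closed_mk0.
Qed.

Lemma sysE w : sys w <-> forall k, ev (se k) w = 0.
Proof.
have i0 : (inord 0 : 'I_5) = o5 0 by apply/val_inj; rewrite /= inordK.
have i1 : (inord 1 : 'I_5) = o5 1 by apply/val_inj; rewrite /= inordK.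
have i2 : (inord 2 : 'I_5) = o5 2 by apply/val_inj; rewrite /= inordK.
have i3 : (inord 3 : 'I_5) = o5 3 by apply/val_inj; rewrite /= inordK.
have i4 : (inord 4 : 'I_5) = o5 4 by apply/val_inj; rewrite /= inordK.
rewrite /sys /Defs.coord i0 i1 i2 i3 i4; split.
  by case=> h0 h1 h2 h3 h4; apply: P5; apply/eqP; rewrite /= subr_eq0; apply/eqP.
move=> h; split; [move: (h (o5 0))|move: (h (o5 1))|move: (h (o5 2))|move: (h (o5 3))|move: (h (o5 4))];
  by move=> /= /eqP; rewrite subr_eq0 => /eqP.
Qed.

Lemma QV_scale t v : QV v -> QV (t *: v).
Proof.
move=> h; apply: P5; rewrite /= !mxE.
- apply: (comb1 (c1 := t * t) _ (h (o5 0))); rewrite /=; ring.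
- apply: (comb1 (c1 := t * t) _ (h (o5 1))); rewrite /=; ring.
- apply: (comb1 (c1 := t * t) _ (h (o5 2))); rewrite /=; ring.
- apply: (comb1 (c1 := t * t) _ (h (o5 3))); rewrite /=; ring.
- apply: (comb1 (c1 := t * t) _ (h (o5 4))); rewrite /=; ring.
Qed.
Lemma ch0_1 (w : 'rV[K]_5) : chart (o6 0) w ord0 (o6 1) = w ord0 (o5 0).
Proof. by rewrite (@chart_lift _ _ _ (o5 0)) //; apply/val_inj. Qed.
Lemma ch0_2 (w : 'rV[K]_5) : chart (o6 0) w ord0 (o6 2) = w ord0 (o5 1).
Proof. by rewrite (@chart_lift _ _ _ (o5 1)) //; apply/val_inj. Qed.
Lemma ch0_3 (w : 'rV[K]_5) : chart (o6 0) w ord0 (o6 3) = w ord0 (o5 2).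
Proof. by rewrite (@chart_lift _ _ _ (o5 2)) //; apply/val_inj. Qed.
Lemma ch0_4 (w : 'rV[K]_5) : chart (o6 0) w ord0 (o6 4) = w ord0 (o5 3).
Proof. by rewrite (@chart_lift _ _ _ (o5 3)) //; apply/val_inj. Qed.
Lemma ch0_5 (w : 'rV[K]_5) : chart (o6 0) w ord0 (o6 5) = w ord0 (o5 4).
Proof. by rewrite (@chart_lift _ _ _ (o5 4)) //; apply/val_inj. Qed.
Lemma ch1_0 (w : 'rV[K]_5) : chart (o6 1) w ord0 (o6 0) = w ord0 (o5 0).
Proof. by rewrite (@chart_lift _ _ _ (o5 0)) //; apply/val_inj. Qed.
Lemma ch1_2 (w : 'rV[K]_5) : chart (o6 1) w ord0 (o6 2) = w ord0 (o5 1).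
Proof. by rewrite (@chart_lift _ _ _ (o5 1)) //; apply/val_inj. Qed.
Lemma ch1_3 (w : 'rV[K]_5) : chart (o6 1) w ord0 (o6 3) = w ord0 (o5 2).
Proof. by rewrite (@chart_lift _ _ _ (o5 2)) //; apply/val_inj. Qed.
Lemma ch1_4 (w : 'rV[K]_5) : chart (o6 1) w ord0 (o6 4) = w ord0 (o5 3).
Proof. by rewrite (@chart_lift _ _ _ (o5 3)) //; apply/val_inj. Qed.
Lemma ch1_5 (w : 'rV[K]_5) : chart (o6 1) w ord0 (o6 5) = w ord0 (o5 4).
Proof. by rewrite (@chart_lift _ _ _ (o5 4)) //; apply/val_inj. Qed.
Lemma ch2_0 (w : 'rV[K]_5) : chart (o6 2) w ord0 (o6 0) = w ord0 (o5 0).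
Proof. by rewrite (@chart_lift _ _ _ (o5 0)) //; apply/val_inj. Qed.
Lemma ch2_1 (w : 'rV[K]_5) : chart (o6 2) w ord0 (o6 1) = w ord0 (o5 1).
Proof. by rewrite (@chart_lift _ _ _ (o5 1)) //; apply/val_inj. Qed.
Lemma ch2_3 (w : 'rV[K]_5) : chart (o6 2) w ord0 (o6 3) = w ord0 (o5 2).
Proof. by rewrite (@chart_lift _ _ _ (o5 2)) //; apply/val_inj. Qed.
Lemma ch2_4 (w : 'rV[K]_5) : chart (o6 2) w ord0 (o6 4) = w ord0 (o5 3).
Proof. by rewrite (@chart_lift _ _ _ (o5 3)) //; apply/val_inj. Qed.
Lemma ch2_5 (w : 'rV[K]_5) : chart (o6 2) w ord0 (o6 5) = w ord0 (o5 4).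
Proof. by rewrite (@chart_lift _ _ _ (o5 4)) //; apply/val_inj. Qed.
Lemma ch3_0 (w : 'rV[K]_5) : chart (o6 3) w ord0 (o6 0) = w ord0 (o5 0).
Proof. by rewrite (@chart_lift _ _ _ (o5 0)) //; apply/val_inj. Qed.
Lemma ch3_1 (w : 'rV[K]_5) : chart (o6 3) w ord0 (o6 1) = w ord0 (o5 1).
Proof. by rewrite (@chart_lift _ _ _ (o5 1)) //; apply/val_inj. Qed.
Lemma ch3_2 (w : 'rV[K]_5) : chart (o6 3) w ord0 (o6 2) = w ord0 (o5 2).
Proof. by rewrite (@chart_lift _ _ _ (o5 2)) //; apply/val_inj. Qed.
Lemma ch3_4 (w : 'rV[K]_5) : chart (o6 3) w ord0 (o6 4) = w ord0 (o5 3).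
Proof. by rewrite (@chart_lift _ _ _ (o5 3)) //; apply/val_inj. Qed.
Lemma ch3_5 (w : 'rV[K]_5) : chart (o6 3) w ord0 (o6 5) = w ord0 (o5 4).
Proof. by rewrite (@chart_lift _ _ _ (o5 4)) //; apply/val_inj. Qed.
Lemma ch4_0 (w : 'rV[K]_5) : chart (o6 4) w ord0 (o6 0) = w ord0 (o5 0).
Proof. by rewrite (@chart_lift _ _ _ (o5 0)) //; apply/val_inj. Qed.
Lemma ch4_1 (w : 'rV[K]_5) : chart (o6 4) w ord0 (o6 1) = w ord0 (o5 1).
Proof. by rewrite (@chart_lift _ _ _ (o5 1)) //; apply/val_inj. Qed.
Lemma ch4_2 (w : 'rV[K]_5) : chart (o6 4) w ord0 (o6 2) = w ord0 (o5 2).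
Proof. by rewrite (@chart_lift _ _ _ (o5 2)) //; apply/val_inj. Qed.
Lemma ch4_3 (w : 'rV[K]_5) : chart (o6 4) w ord0 (o6 3) = w ord0 (o5 3).
Proof. by rewrite (@chart_lift _ _ _ (o5 3)) //; apply/val_inj. Qed.
Lemma ch4_5 (w : 'rV[K]_5) : chart (o6 4) w ord0 (o6 5) = w ord0 (o5 4).
Proof. by rewrite (@chart_lift _ _ _ (o5 4)) //; apply/val_inj. Qed.
Lemma ch5_0 (w : 'rV[K]_5) : chart (o6 5) w ord0 (o6 0) = w ord0 (o5 0).
Proof. by rewrite (@chart_lift _ _ _ (o5 0)) //; apply/val_inj. Qed.
Lemma ch5_1 (w : 'rV[K]_5) : chart (o6 5) w ord0 (o6 1) = w ord0 (o5 1).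
Proof. by rewrite (@chart_lift _ _ _ (o5 1)) //; apply/val_inj. Qed.
Lemma ch5_2 (w : 'rV[K]_5) : chart (o6 5) w ord0 (o6 2) = w ord0 (o5 2).
Proof. by rewrite (@chart_lift _ _ _ (o5 2)) //; apply/val_inj. Qed.
Lemma ch5_3 (w : 'rV[K]_5) : chart (o6 5) w ord0 (o6 3) = w ord0 (o5 3).
Proof. by rewrite (@chart_lift _ _ _ (o5 3)) //; apply/val_inj. Qed.
Lemma ch5_4 (w : 'rV[K]_5) : chart (o6 5) w ord0 (o6 4) = w ord0 (o5 4).
Proof. by rewrite (@chart_lift _ _ _ (o5 4)) //; apply/val_inj. Qed.
Lemma QV_chart0 z : QV (chart (o6 0) z) <-> forall k, ev (se k) z = 0.
Proof.
split => h; apply: P5.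
- apply: (comb1 (c1 := 1) _ (h (o5 0))); rewrite /=; rewrite ?chart_at ?ch0_1 ?ch0_2 ?ch0_3 ?ch0_4 ?ch0_5; ring.
- apply: (comb1 (c1 := 1) _ (h (o5 1))); rewrite /=; rewrite ?chart_at ?ch0_1 ?ch0_2 ?ch0_3 ?ch0_4 ?ch0_5; ring.
- apply: (comb1 (c1 := 1) _ (h (o5 2))); rewrite /=; rewrite ?chart_at ?ch0_1 ?ch0_2 ?ch0_3 ?ch0_4 ?ch0_5; ring.
- apply: (comb1 (c1 := 1) _ (h (o5 3))); rewrite /=; rewrite ?chart_at ?ch0_1 ?ch0_2 ?ch0_3 ?ch0_4 ?ch0_5; ring.
- apply: (comb1 (c1 := 1) _ (h (o5 4))); rewrite /=; rewrite ?chart_at ?ch0_1 ?ch0_2 ?ch0_3 ?ch0_4 ?ch0_5; ring.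
- apply: (comb1 (c1 := 1) _ (h (o5 0))); rewrite /=; rewrite ?chart_at ?ch0_1 ?ch0_2 ?ch0_3 ?ch0_4 ?ch0_5; ring.
- apply: (comb1 (c1 := 1) _ (h (o5 1))); rewrite /=; rewrite ?chart_at ?ch0_1 ?ch0_2 ?ch0_3 ?ch0_4 ?ch0_5; ring.
- apply: (comb1 (c1 := 1) _ (h (o5 2))); rewrite /=; rewrite ?chart_at ?ch0_1 ?ch0_2 ?ch0_3 ?ch0_4 ?ch0_5; ring.
- apply: (comb1 (c1 := 1) _ (h (o5 3))); rewrite /=; rewrite ?chart_at ?ch0_1 ?ch0_2 ?ch0_3 ?ch0_4 ?ch0_5; ring.
- apply: (comb1 (c1 := 1) _ (h (o5 4))); rewrite /=; rewrite ?chart_at ?ch0_1 ?ch0_2 ?ch0_3 ?ch0_4 ?ch0_5; ring.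
Qed.
Lemma l0_0 : lift (ord0 : 'I_6) (o5 0) = o6 1. Proof. by apply/val_inj. Qed.
Lemma l0_1 : lift (ord0 : 'I_6) (o5 1) = o6 2. Proof. by apply/val_inj. Qed.
Lemma l0_2 : lift (ord0 : 'I_6) (o5 2) = o6 3. Proof. by apply/val_inj. Qed.
Lemma l0_3 : lift (ord0 : 'I_6) (o5 3) = o6 4. Proof. by apply/val_inj. Qed.
Lemma l0_4 : lift (ord0 : 'I_6) (o5 4) = o6 5. Proof. by apply/val_inj. Qed.

Lemma ord0_6 : (ord0 : 'I_6) = o6 0. Proof. by apply/val_inj. Qed.

Lemma cone_QV : cone (solset K) `<=` [set v | QV v].
Proof.
move=> v [t [z [_ hz ->]]].
apply: QV_scale; rewrite ord0_6; apply/QV_chart0; exact/sysE.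
Qed.

Lemma QV_cone v : QV v -> v ord0 (o6 0) != 0 -> cone (solset K) v.
Proof.
move=> h v0.
pose z : 'rV[K]_5 := \row_j (v ord0 (lift ord0 j) / v ord0 (o6 0)).
exists (v ord0 (o6 0)), z; split => //.
  apply/sysE; apply: P5; rewrite /z /= !mxE.
  - apply: (comb1 (c1 := (v ord0 (o6 0))^-2) _ (h (o5 0))); rewrite /= ?l0_0 ?l0_1 ?l0_2 ?l0_3 ?l0_4.
    by field.
  - apply: (comb1 (c1 := (v ord0 (o6 0))^-2) _ (h (o5 1))); rewrite /= ?l0_0 ?l0_1 ?l0_2 ?l0_3 ?l0_4.
    by field.
  - apply: (comb1 (c1 := (v ord0 (o6 0))^-2) _ (h (o5 2))); rewrite /= ?l0_0 ?l0_1 ?l0_2 ?l0_3 ?l0_4.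
    by field.
  - apply: (comb1 (c1 := (v ord0 (o6 0))^-2) _ (h (o5 3))); rewrite /= ?l0_0 ?l0_1 ?l0_2 ?l0_3 ?l0_4.
    by field.
  - apply: (comb1 (c1 := (v ord0 (o6 0))^-2) _ (h (o5 4))); rewrite /= ?l0_0 ?l0_1 ?l0_2 ?l0_3 ?l0_4.
    by field.
apply/rowP => k; rewrite !mxE.
case: (unliftP ord0 k) => [j ->|->]; first by rewrite mxE mulrC mulfVK.
by rewrite mulr1 ord0_6.
Qed.
Definition tau (c : nat) (a b : K) : 'rV[K]_6 := \row_(k < 6) (if val k == c then a else if val k == ((c + 1) %% 5 + 1)%N then b else 0).
Definition gam1 (a b : K) : 'I_6 -> pe K 1 := fun l =>
  match val l with
  | 0 => (PMul (@PC K 1 (a)) (@PX K 1 ord0))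
  | 1 => (@PC K 1 (a))
  | 2 => (PAdd (PMul (@PC K 1 (a)) (PMul (@PX K 1 ord0) (@PX K 1 ord0))) (PMul (@PC K 1 (a*a/b)) (PAdd (PMul (@PX K 1 ord0) (PMul (@PX K 1 ord0) (@PX K 1 ord0))) (PMul (@PX K 1 ord0) (@PX K 1 ord0)))))
  | 3 => (@PC K 1 (b))
  | 4 => (PMul (@PC K 1 (a*a/b)) (PAdd (PMul (@PX K 1 ord0) (@PX K 1 ord0)) (@PX K 1 ord0)))
  | _ => (PAdd (PMul (@PC K 1 (a)) (PMul (@PX K 1 ord0) (@PX K 1 ord0))) (PMul (@PC K 1 (b)) (@PX K 1 ord0)))
  end.
Definition del1a (a : K) : 'I_6 -> pe K 1 := fun l =>
  match val l with
  | 0 => (@PC K 1 (0))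
  | 1 => (@PC K 1 (a))
  | 2 => (@PC K 1 (0))
  | 3 => (@PX K 1 ord0)
  | 4 => (@PC K 1 (0))
  | _ => (@PC K 1 (0))
  end.
Definition del1b (b : K) : 'I_6 -> pe K 1 := fun l =>
  match val l with
  | 0 => (@PC K 1 (0))
  | 1 => (@PX K 1 ord0)
  | 2 => (@PC K 1 (0))
  | 3 => (@PC K 1 (b))
  | 4 => (@PC K 1 (0))
  | _ => (@PC K 1 (0))
  end.

Lemma inf1 a b : closure (cone (solset K)) (tau 1 a b).
Proof.
have gen : forall a b, a != 0 -> b != 0 -> closure (cone (solset K)) (tau 1 a b).
  move=> a' b' a0 b0.
  have -> : tau 1 a' b' = mk (gam1 a' b') (r1 0).
    apply/rowP; apply: P6; rewrite /mk /r1 /tau !mxE /= ?mxE; ring.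
  apply: curve_closure => u u0; apply: subset_closure; apply: QV_cone.
    apply: P5; rewrite /= /mk /r1 !mxE /= ?mxE; field; done.
  by rewrite /mk /r1 !mxE /= ?mxE mulr1 mulf_neq0.
have gen2 : forall a b, a != 0 -> closure (cone (solset K)) (tau 1 a b).
  move=> a' b' a0; have [->|b0] := eqVneq b' 0; last exact: gen.
  have -> : tau 1 a' 0 = mk (del1a a') (r1 0).
    apply/rowP; apply: P6; rewrite /mk /r1 /tau !mxE /= ?mxE; ring.
  apply: curve_closure => u u0.
  have -> : mk (del1a a') (r1 u) = tau 1 a' u.
    apply/rowP; apply: P6; rewrite /mk /r1 /tau !mxE /= ?mxE; ring.
  exact: gen.
have [->|a0] := eqVneq a 0; last exact: gen2.
have -> : tau 1 0 b = mk (del1b b) (r1 0).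
  apply/rowP; apply: P6; rewrite /mk /r1 /tau !mxE /= ?mxE; ring.
apply: curve_closure => u u0.
have -> : mk (del1b b) (r1 u) = tau 1 u b.
  apply/rowP; apply: P6; rewrite /mk /r1 /tau !mxE /= ?mxE; ring.
exact: gen2.
Qed.
Definition gam2 (a b : K) : 'I_6 -> pe K 1 := fun l =>
  match val l with
  | 0 => (PMul (@PC K 1 (a)) (@PX K 1 ord0))
  | 1 => (PAdd (PMul (@PC K 1 (a)) (PMul (@PX K 1 ord0) (@PX K 1 ord0))) (PMul (@PC K 1 (b)) (@PX K 1 ord0)))
  | 2 => (@PC K 1 (a))
  | 3 => (PAdd (PMul (@PC K 1 (a)) (PMul (@PX K 1 ord0) (@PX K 1 ord0))) (PMul (@PC K 1 (a*a/b)) (PAdd (PMul (@PX K 1 ord0) (PMul (@PX K 1 ord0) (@PX K 1 ord0))) (PMul (@PX K 1 ord0) (@PX K 1 ord0)))))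
  | 4 => (@PC K 1 (b))
  | _ => (PMul (@PC K 1 (a*a/b)) (PAdd (PMul (@PX K 1 ord0) (@PX K 1 ord0)) (@PX K 1 ord0)))
  end.
Definition del2a (a : K) : 'I_6 -> pe K 1 := fun l =>
  match val l with
  | 0 => (@PC K 1 (0))
  | 1 => (@PC K 1 (0))
  | 2 => (@PC K 1 (a))
  | 3 => (@PC K 1 (0))
  | 4 => (@PX K 1 ord0)
  | _ => (@PC K 1 (0))
  end.
Definition del2b (b : K) : 'I_6 -> pe K 1 := fun l =>
  match val l with
  | 0 => (@PC K 1 (0))
  | 1 => (@PC K 1 (0))
  | 2 => (@PX K 1 ord0)
  | 3 => (@PC K 1 (0))
  | 4 => (@PC K 1 (b))
  | _ => (@PC K 1 (0))
  end.

Lemma inf2 a b : closure (cone (solset K)) (tau 2 a b).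
Proof.
have gen : forall a b, a != 0 -> b != 0 -> closure (cone (solset K)) (tau 2 a b).
  move=> a' b' a0 b0.
  have -> : tau 2 a' b' = mk (gam2 a' b') (r1 0).
    apply/rowP; apply: P6; rewrite /mk /r1 /tau !mxE /= ?mxE; ring.
  apply: curve_closure => u u0; apply: subset_closure; apply: QV_cone.
    apply: P5; rewrite /= /mk /r1 !mxE /= ?mxE; field; done.
  by rewrite /mk /r1 !mxE /= ?mxE mulr1 mulf_neq0.
have gen2 : forall a b, a != 0 -> closure (cone (solset K)) (tau 2 a b).
  move=> a' b' a0; have [->|b0] := eqVneq b' 0; last exact: gen.
  have -> : tau 2 a' 0 = mk (del2a a') (r1 0).
    apply/rowP; apply: P6; rewrite /mk /r1 /tau !mxE /= ?mxE; ring.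
  apply: curve_closure => u u0.
  have -> : mk (del2a a') (r1 u) = tau 2 a' u.
    apply/rowP; apply: P6; rewrite /mk /r1 /tau !mxE /= ?mxE; ring.
  exact: gen.
have [->|a0] := eqVneq a 0; last exact: gen2.
have -> : tau 2 0 b = mk (del2b b) (r1 0).
  apply/rowP; apply: P6; rewrite /mk /r1 /tau !mxE /= ?mxE; ring.
apply: curve_closure => u u0.
have -> : mk (del2b b) (r1 u) = tau 2 u b.
  apply/rowP; apply: P6; rewrite /mk /r1 /tau !mxE /= ?mxE; ring.
exact: gen2.
Qed.
Definition gam3 (a b : K) : 'I_6 -> pe K 1 := fun l =>
  match val l with
  | 0 => (PMul (@PC K 1 (a)) (@PX K 1 ord0))
  | 1 => (PMul (@PC K 1 (a*a/b)) (PAdd (PMul (@PX K 1 ord0) (@PX K 1 ord0)) (@PX K 1 ord0)))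
  | 2 => (PAdd (PMul (@PC K 1 (a)) (PMul (@PX K 1 ord0) (@PX K 1 ord0))) (PMul (@PC K 1 (b)) (@PX K 1 ord0)))
  | 3 => (@PC K 1 (a))
  | 4 => (PAdd (PMul (@PC K 1 (a)) (PMul (@PX K 1 ord0) (@PX K 1 ord0))) (PMul (@PC K 1 (a*a/b)) (PAdd (PMul (@PX K 1 ord0) (PMul (@PX K 1 ord0) (@PX K 1 ord0))) (PMul (@PX K 1 ord0) (@PX K 1 ord0)))))
  | _ => (@PC K 1 (b))
  end.
Definition del3a (a : K) : 'I_6 -> pe K 1 := fun l =>
  match val l with
  | 0 => (@PC K 1 (0))
  | 1 => (@PC K 1 (0))
  | 2 => (@PC K 1 (0))
  | 3 => (@PC K 1 (a))
  | 4 => (@PC K 1 (0))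
  | _ => (@PX K 1 ord0)
  end.
Definition del3b (b : K) : 'I_6 -> pe K 1 := fun l =>
  match val l with
  | 0 => (@PC K 1 (0))
  | 1 => (@PC K 1 (0))
  | 2 => (@PC K 1 (0))
  | 3 => (@PX K 1 ord0)
  | 4 => (@PC K 1 (0))
  | _ => (@PC K 1 (b))
  end.

Lemma inf3 a b : closure (cone (solset K)) (tau 3 a b).
Proof.
have gen : forall a b, a != 0 -> b != 0 -> closure (cone (solset K)) (tau 3 a b).
  move=> a' b' a0 b0.
  have -> : tau 3 a' b' = mk (gam3 a' b') (r1 0).
    apply/rowP; apply: P6; rewrite /mk /r1 /tau !mxE /= ?mxE; ring.
  apply: curve_closure => u u0; apply: subset_closure; apply: QV_cone.
    apply: P5; rewrite /= /mk /r1 !mxE /= ?mxE; field; done.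
  by rewrite /mk /r1 !mxE /= ?mxE mulr1 mulf_neq0.
have gen2 : forall a b, a != 0 -> closure (cone (solset K)) (tau 3 a b).
  move=> a' b' a0; have [->|b0] := eqVneq b' 0; last exact: gen.
  have -> : tau 3 a' 0 = mk (del3a a') (r1 0).
    apply/rowP; apply: P6; rewrite /mk /r1 /tau !mxE /= ?mxE; ring.
  apply: curve_closure => u u0.
  have -> : mk (del3a a') (r1 u) = tau 3 a' u.
    apply/rowP; apply: P6; rewrite /mk /r1 /tau !mxE /= ?mxE; ring.
  exact: gen.
have [->|a0] := eqVneq a 0; last exact: gen2.
have -> : tau 3 0 b = mk (del3b b) (r1 0).
  apply/rowP; apply: P6; rewrite /mk /r1 /tau !mxE /= ?mxE; ring.
apply: curve_closure => u u0.
have -> : mk (del3b b) (r1 u) = tau 3 u b.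
  apply/rowP; apply: P6; rewrite /mk /r1 /tau !mxE /= ?mxE; ring.
exact: gen2.
Qed.
Definition gam4 (a b : K) : 'I_6 -> pe K 1 := fun l =>
  match val l with
  | 0 => (PMul (@PC K 1 (a)) (@PX K 1 ord0))
  | 1 => (@PC K 1 (b))
  | 2 => (PMul (@PC K 1 (a*a/b)) (PAdd (PMul (@PX K 1 ord0) (@PX K 1 ord0)) (@PX K 1 ord0)))
  | 3 => (PAdd (PMul (@PC K 1 (a)) (PMul (@PX K 1 ord0) (@PX K 1 ord0))) (PMul (@PC K 1 (b)) (@PX K 1 ord0)))
  | 4 => (@PC K 1 (a))
  | _ => (PAdd (PMul (@PC K 1 (a)) (PMul (@PX K 1 ord0) (@PX K 1 ord0))) (PMul (@PC K 1 (a*a/b)) (PAdd (PMul (@PX K 1 ord0) (PMul (@PX K 1 ord0) (@PX K 1 ord0))) (PMul (@PX K 1 ord0) (@PX K 1 ord0)))))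
  end.
Definition del4a (a : K) : 'I_6 -> pe K 1 := fun l =>
  match val l with
  | 0 => (@PC K 1 (0))
  | 1 => (@PX K 1 ord0)
  | 2 => (@PC K 1 (0))
  | 3 => (@PC K 1 (0))
  | 4 => (@PC K 1 (a))
  | _ => (@PC K 1 (0))
  end.
Definition del4b (b : K) : 'I_6 -> pe K 1 := fun l =>
  match val l with
  | 0 => (@PC K 1 (0))
  | 1 => (@PC K 1 (b))
  | 2 => (@PC K 1 (0))
  | 3 => (@PC K 1 (0))
  | 4 => (@PX K 1 ord0)
  | _ => (@PC K 1 (0))
  end.

Lemma inf4 a b : closure (cone (solset K)) (tau 4 a b).
Proof.
have gen : forall a b, a != 0 -> b != 0 -> closure (cone (solset K)) (tau 4 a b).
  move=> a' b' a0 b0.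
  have -> : tau 4 a' b' = mk (gam4 a' b') (r1 0).
    apply/rowP; apply: P6; rewrite /mk /r1 /tau !mxE /= ?mxE; ring.
  apply: curve_closure => u u0; apply: subset_closure; apply: QV_cone.
    apply: P5; rewrite /= /mk /r1 !mxE /= ?mxE; field; done.
  by rewrite /mk /r1 !mxE /= ?mxE mulr1 mulf_neq0.
have gen2 : forall a b, a != 0 -> closure (cone (solset K)) (tau 4 a b).
  move=> a' b' a0; have [->|b0] := eqVneq b' 0; last exact: gen.
  have -> : tau 4 a' 0 = mk (del4a a') (r1 0).
    apply/rowP; apply: P6; rewrite /mk /r1 /tau !mxE /= ?mxE; ring.
  apply: curve_closure => u u0.
  have -> : mk (del4a a') (r1 u) = tau 4 a' u.
    apply/rowP; apply: P6; rewrite /mk /r1 /tau !mxE /= ?mxE; ring.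
  exact: gen.
have [->|a0] := eqVneq a 0; last exact: gen2.
have -> : tau 4 0 b = mk (del4b b) (r1 0).
  apply/rowP; apply: P6; rewrite /mk /r1 /tau !mxE /= ?mxE; ring.
apply: curve_closure => u u0.
have -> : mk (del4b b) (r1 u) = tau 4 u b.
  apply/rowP; apply: P6; rewrite /mk /r1 /tau !mxE /= ?mxE; ring.
exact: gen2.
Qed.
Definition gam5 (a b : K) : 'I_6 -> pe K 1 := fun l =>
  match val l with
  | 0 => (PMul (@PC K 1 (a)) (@PX K 1 ord0))
  | 1 => (PAdd (PMul (@PC K 1 (a)) (PMul (@PX K 1 ord0) (@PX K 1 ord0))) (PMul (@PC K 1 (a*a/b)) (PAdd (PMul (@PX K 1 ord0) (PMul (@PX K 1 ord0) (@PX K 1 ord0))) (PMul (@PX K 1 ord0) (@PX K 1 ord0)))))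
  | 2 => (@PC K 1 (b))
  | 3 => (PMul (@PC K 1 (a*a/b)) (PAdd (PMul (@PX K 1 ord0) (@PX K 1 ord0)) (@PX K 1 ord0)))
  | 4 => (PAdd (PMul (@PC K 1 (a)) (PMul (@PX K 1 ord0) (@PX K 1 ord0))) (PMul (@PC K 1 (b)) (@PX K 1 ord0)))
  | _ => (@PC K 1 (a))
  end.
Definition del5a (a : K) : 'I_6 -> pe K 1 := fun l =>
  match val l with
  | 0 => (@PC K 1 (0))
  | 1 => (@PC K 1 (0))
  | 2 => (@PX K 1 ord0)
  | 3 => (@PC K 1 (0))
  | 4 => (@PC K 1 (0))
  | _ => (@PC K 1 (a))
  end.
Definition del5b (b : K) : 'I_6 -> pe K 1 := fun l =>
  match val l with
  | 0 => (@PC K 1 (0))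
  | 1 => (@PC K 1 (0))
  | 2 => (@PC K 1 (b))
  | 3 => (@PC K 1 (0))
  | 4 => (@PC K 1 (0))
  | _ => (@PX K 1 ord0)
  end.

Lemma inf5 a b : closure (cone (solset K)) (tau 5 a b).
Proof.
have gen : forall a b, a != 0 -> b != 0 -> closure (cone (solset K)) (tau 5 a b).
  move=> a' b' a0 b0.
  have -> : tau 5 a' b' = mk (gam5 a' b') (r1 0).
    apply/rowP; apply: P6; rewrite /mk /r1 /tau !mxE /= ?mxE; ring.
  apply: curve_closure => u u0; apply: subset_closure; apply: QV_cone.
    apply: P5; rewrite /= /mk /r1 !mxE /= ?mxE; field; done.
  by rewrite /mk /r1 !mxE /= ?mxE mulr1 mulf_neq0.
have gen2 : forall a b, a != 0 -> closure (cone (solset K)) (tau 5 a b).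
  move=> a' b' a0; have [->|b0] := eqVneq b' 0; last exact: gen.
  have -> : tau 5 a' 0 = mk (del5a a') (r1 0).
    apply/rowP; apply: P6; rewrite /mk /r1 /tau !mxE /= ?mxE; ring.
  apply: curve_closure => u u0.
  have -> : mk (del5a a') (r1 u) = tau 5 a' u.
    apply/rowP; apply: P6; rewrite /mk /r1 /tau !mxE /= ?mxE; ring.
  exact: gen.
have [->|a0] := eqVneq a 0; last exact: gen2.
have -> : tau 5 0 b = mk (del5b b) (r1 0).
  apply/rowP; apply: P6; rewrite /mk /r1 /tau !mxE /= ?mxE; ring.
apply: curve_closure => u u0.
have -> : mk (del5b b) (r1 u) = tau 5 u b.
  apply/rowP; apply: P6; rewrite /mk /r1 /tau !mxE /= ?mxE; ring.
exact: gen2.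
Qed.

Lemma QV_inf v : QV v -> v ord0 (o6 0) = 0 ->
  (exists a b, v = tau 1 a b) \/ (exists a b, v = tau 2 a b) \/ (exists a b, v = tau 3 a b) \/
      (exists a b, v = tau 4 a b) \/ (exists a b, v = tau 5 a b).
Proof.
move=> h h0.
have p34 : (v ord0 (o6 3)) * (v ord0 (o6 4)) = 0.
  by apply: (comb2 (c1 := -1) (c2 := (v ord0 (o6 0)) + (v ord0 (o6 1))) _ (h (o5 0)) h0); rewrite /=; ring.
have p45 : (v ord0 (o6 4)) * (v ord0 (o6 5)) = 0.
  by apply: (comb2 (c1 := -1) (c2 := (v ord0 (o6 0)) + (v ord0 (o6 2))) _ (h (o5 1)) h0); rewrite /=; ring.
have p51 : (v ord0 (o6 5)) * (v ord0 (o6 1)) = 0.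
  by apply: (comb2 (c1 := -1) (c2 := (v ord0 (o6 0)) + (v ord0 (o6 3))) _ (h (o5 2)) h0); rewrite /=; ring.
have p12 : (v ord0 (o6 1)) * (v ord0 (o6 2)) = 0.
  by apply: (comb2 (c1 := -1) (c2 := (v ord0 (o6 0)) + (v ord0 (o6 4))) _ (h (o5 3)) h0); rewrite /=; ring.
have p23 : (v ord0 (o6 2)) * (v ord0 (o6 3)) = 0.
  by apply: (comb2 (c1 := -1) (c2 := (v ord0 (o6 0)) + (v ord0 (o6 5))) _ (h (o5 4)) h0); rewrite /=; ring.
have [z1|n1] := eqVneq (v ord0 (o6 1)) 0; last first.
  have z2 : (v ord0 (o6 2)) = 0 by move/eqP: p12; rewrite mulf_eq0 (negbTE n1) /= => /eqP.
  have z5 : (v ord0 (o6 5)) = 0 by move/eqP: p51; rewrite mulf_eq0 (negbTE n1) orbF => /eqP.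
  have /eqP := p34; rewrite mulf_eq0 => /orP [/eqP z3|/eqP z4].
    right; right; right; left; exists (v ord0 (o6 4)), (v ord0 (o6 1)); apply/rowP; apply: P6; rewrite !mxE //=.
  left; exists (v ord0 (o6 1)), (v ord0 (o6 3)); apply/rowP; apply: P6; rewrite !mxE //=.
have [z2|n2] := eqVneq (v ord0 (o6 2)) 0; last first.
  have z3 : (v ord0 (o6 3)) = 0 by move/eqP: p23; rewrite mulf_eq0 (negbTE n2) /= => /eqP.
  have /eqP := p45; rewrite mulf_eq0 => /orP [/eqP z4|/eqP z5].
    right; right; right; right; exists (v ord0 (o6 5)), (v ord0 (o6 2)); apply/rowP; apply: P6; rewrite !mxE //=.
  right; left; exists (v ord0 (o6 2)), (v ord0 (o6 4)); apply/rowP; apply: P6; rewrite !mxE //=.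
have [z4|n4] := eqVneq (v ord0 (o6 4)) 0.
  right; right; left; exists (v ord0 (o6 3)), (v ord0 (o6 5)); apply/rowP; apply: P6; rewrite !mxE //=.
have z3 : (v ord0 (o6 3)) = 0 by move/eqP: p34; rewrite mulf_eq0 (negbTE n4) orbF => /eqP.
have z5 : (v ord0 (o6 5)) = 0 by move/eqP: p45; rewrite mulf_eq0 (negbTE n4) /= => /eqP.
right; left; exists (v ord0 (o6 2)), (v ord0 (o6 4)); apply/rowP; apply: P6; rewrite !mxE //=.
Qed.

Lemma projE v : proj_closure (solset K) v <-> v != 0 /\ QV v.
Proof.
split => [[nz cl]|[nz h]]; split => //.
  have E := (closure_id _).1 QV_closed.
  by move: (closure_subset cone_QV cl); rewrite -E.
have [v0|v0] := eqVneq (v ord0 (o6 0)) 0; last by apply: subset_closure; exact: QV_cone.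
by case: (QV_inf h v0) => [|[|[|[|]]]] [a [b ->]]; [exact: inf1|exact: inf2|exact: inf3|exact: inf4|exact: inf5].
Qed.

Lemma in_chartE i w : in_chart i (proj_closure (solset K)) w <-> QV (chart i w).
Proof.
rewrite /in_chart /=; rewrite projE; split => [[_ h] | h] //; split => //; exact: chart_neq0.
Qed.
Definition fes1 : 'I_3 -> pe K 5 := fun l =>
  match val l with
  | 0 => (PAdd (PAdd (PMul (@PX K 5 (o5 0)) (@PX K 5 (o5 0))) (PMul (@PX K 5 (o5 0)) (@PC K 5 (1)))) (PNeg (PMul (@PX K 5 (o5 2)) (@PX K 5 (o5 3)))))
  | 1 => (PAdd (PAdd (PMul (@PX K 5 (o5 0)) (@PX K 5 (o5 0))) (PMul (@PX K 5 (o5 0)) (@PX K 5 (o5 2)))) (PNeg (PMul (@PX K 5 (o5 4)) (@PC K 5 (1)))))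
  | _ => (PAdd (PAdd (PMul (@PX K 5 (o5 0)) (@PX K 5 (o5 0))) (PMul (@PX K 5 (o5 0)) (@PX K 5 (o5 3)))) (PNeg (PMul (@PC K 5 (1)) (@PX K 5 (o5 1)))))
  end.
Lemma QV1_iff w : QV (chart (o6 1) w) <-> mk fes1 w = 0.
Proof.
rewrite mk3E; split.
  move=> h; split.
  - apply: (comb1 (c1 := 1) _ (h (o5 0))); rewrite /=; rewrite ?chart_at ?ch1_0 ?ch1_2 ?ch1_3 ?ch1_4 ?ch1_5; ring.
  - apply: (comb1 (c1 := 1) _ (h (o5 2))); rewrite /=; rewrite ?chart_at ?ch1_0 ?ch1_2 ?ch1_3 ?ch1_4 ?ch1_5; ring.
  - apply: (comb1 (c1 := 1) _ (h (o5 3))); rewrite /=; rewrite ?chart_at ?ch1_0 ?ch1_2 ?ch1_3 ?ch1_4 ?ch1_5; ring.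
case=> h0 h1 h2; apply: P5.
- apply: (comb1 (c1 := 1) _ h0); rewrite /=; rewrite ?chart_at ?ch1_0 ?ch1_2 ?ch1_3 ?ch1_4 ?ch1_5; ring.
- apply: (comb3 (c1 := (w ord0 (o5 0))) (c2 := (w ord0 (o5 3))) (c3 := - (w ord0 (o5 0))) _ h0 h1 h2); rewrite /=; rewrite ?chart_at ?ch1_0 ?ch1_2 ?ch1_3 ?ch1_4 ?ch1_5; ring.
- apply: (comb1 (c1 := 1) _ h1); rewrite /=; rewrite ?chart_at ?ch1_0 ?ch1_2 ?ch1_3 ?ch1_4 ?ch1_5; ring.
- apply: (comb1 (c1 := 1) _ h2); rewrite /=; rewrite ?chart_at ?ch1_0 ?ch1_2 ?ch1_3 ?ch1_4 ?ch1_5; ring.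
- apply: (comb3 (c1 := (w ord0 (o5 0))) (c2 := - (w ord0 (o5 0))) (c3 := (w ord0 (o5 2))) _ h0 h1 h2); rewrite /=; rewrite ?chart_at ?ch1_0 ?ch1_2 ?ch1_3 ?ch1_4 ?ch1_5; ring.
Qed.

Lemma rank1A (p : 'rV[K]_5) : (2 * p ord0 (o5 0) + 1) != 0 -> \rank (Defs.jacobian (mk fes1) p) = 3.
Proof.
move=> c0; rewrite jacobian_mk.
apply: (@rank3 _ _ (\matrix_(k < 3, i < 5) match val k, val i with
   | 0, 0 => (2 * p ord0 (o5 0) + 1)^-1
   | 0, 4 => (2 * p ord0 (o5 0) + (p ord0 (o5 2))) / (2 * p ord0 (o5 0) + 1)
   | 0, 1 => (2 * p ord0 (o5 0) + (p ord0 (o5 3))) / (2 * p ord0 (o5 0) + 1)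
   | 1, 4 => -1
   | 2, 1 => -1
   | _, _ => 0 end)).
apply/matrixP => k l; rewrite !mxE !big_ord_recl big_ord0 !mxE.
case: k => [[|[|[|//]]] Hk]; case: l => [[|[|[|//]]] Hl]; rewrite /= !mxE /=.
all: by field; try exact c0.
Qed.

Lemma rank1B (p : 'rV[K]_5) : (p ord0 (o5 3)) != 0 -> \rank (Defs.jacobian (mk fes1) p) = 3.
Proof.
move=> c0; rewrite jacobian_mk.
apply: (@rank3 _ _ (\matrix_(k < 3, i < 5) match val k, val i with
   | 0, 2 => (- (p ord0 (o5 3)))^-1
   | 0, 4 => (p ord0 (o5 0)) / (- (p ord0 (o5 3)))
   | 1, 4 => -1
   | 2, 1 => -1
   | _, _ => 0 end)).
apply/matrixP => k l; rewrite !mxE !big_ord_recl big_ord0 !mxE.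
case: k => [[|[|[|//]]] Hk]; case: l => [[|[|[|//]]] Hl]; rewrite /= !mxE /=.
all: by field; try exact c0.
Qed.

Lemma sub1 : submanifold 2 (in_chart (o6 1) (proj_closure (solset K))).
Proof.
move=> p Hp; exists setT, (mk fes1); split.
- exact: openT.
- by [].
- exact: smooth_mk.
- by move=> y _; rewrite in_chartE; exact: QV1_iff.
have hq := (in_chartE _ _).1 Hp (o5 0); rewrite /= in hq; rewrite ?chart_at ?ch1_0 ?ch1_2 ?ch1_3 ?ch1_4 ?ch1_5 in hq.
have [cz|cn] := eqVneq (2 * p ord0 (o5 0) + 1) 0; last exact: rank1A.
have n3 : (p ord0 (o5 3)) != 0.
  apply/eqP => z3.
  have : (1 : K) = 0.
    by apply: (comb3 (c1 := (2 * p ord0 (o5 0) + 1)) (c2 := -4) (c3 := -4 * (p ord0 (o5 2))) _ cz hq z3); ring.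
  by move/eqP; rewrite oner_eq0.
exact: rank1B.
Qed.
Definition fes2 : 'I_3 -> pe K 5 := fun l =>
  match val l with
  | 0 => (PAdd (PAdd (PMul (@PX K 5 (o5 0)) (@PX K 5 (o5 0))) (PMul (@PX K 5 (o5 0)) (@PC K 5 (1)))) (PNeg (PMul (@PX K 5 (o5 3)) (@PX K 5 (o5 4)))))
  | 1 => (PAdd (PAdd (PMul (@PX K 5 (o5 0)) (@PX K 5 (o5 0))) (PMul (@PX K 5 (o5 0)) (@PX K 5 (o5 3)))) (PNeg (PMul (@PX K 5 (o5 1)) (@PC K 5 (1)))))
  | _ => (PAdd (PAdd (PMul (@PX K 5 (o5 0)) (@PX K 5 (o5 0))) (PMul (@PX K 5 (o5 0)) (@PX K 5 (o5 4)))) (PNeg (PMul (@PC K 5 (1)) (@PX K 5 (o5 2)))))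
  end.
Lemma QV2_iff w : QV (chart (o6 2) w) <-> mk fes2 w = 0.
Proof.
rewrite mk3E; split.
  move=> h; split.
  - apply: (comb1 (c1 := 1) _ (h (o5 1))); rewrite /=; rewrite ?chart_at ?ch2_0 ?ch2_1 ?ch2_3 ?ch2_4 ?ch2_5; ring.
  - apply: (comb1 (c1 := 1) _ (h (o5 3))); rewrite /=; rewrite ?chart_at ?ch2_0 ?ch2_1 ?ch2_3 ?ch2_4 ?ch2_5; ring.
  - apply: (comb1 (c1 := 1) _ (h (o5 4))); rewrite /=; rewrite ?chart_at ?ch2_0 ?ch2_1 ?ch2_3 ?ch2_4 ?ch2_5; ring.
case=> h0 h1 h2; apply: P5.
- apply: (comb3 (c1 := (w ord0 (o5 0))) (c2 := - (w ord0 (o5 0))) (c3 := (w ord0 (o5 3))) _ h0 h1 h2); rewrite /=; rewrite ?chart_at ?ch2_0 ?ch2_1 ?ch2_3 ?ch2_4 ?ch2_5; ring.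
- apply: (comb1 (c1 := 1) _ h0); rewrite /=; rewrite ?chart_at ?ch2_0 ?ch2_1 ?ch2_3 ?ch2_4 ?ch2_5; ring.
- apply: (comb3 (c1 := (w ord0 (o5 0))) (c2 := (w ord0 (o5 4))) (c3 := - (w ord0 (o5 0))) _ h0 h1 h2); rewrite /=; rewrite ?chart_at ?ch2_0 ?ch2_1 ?ch2_3 ?ch2_4 ?ch2_5; ring.
- apply: (comb1 (c1 := 1) _ h1); rewrite /=; rewrite ?chart_at ?ch2_0 ?ch2_1 ?ch2_3 ?ch2_4 ?ch2_5; ring.
- apply: (comb1 (c1 := 1) _ h2); rewrite /=; rewrite ?chart_at ?ch2_0 ?ch2_1 ?ch2_3 ?ch2_4 ?ch2_5; ring.
Qed.

Lemma rank2A (p : 'rV[K]_5) : (2 * p ord0 (o5 0) + 1) != 0 -> \rank (Defs.jacobian (mk fes2) p) = 3.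
Proof.
move=> c0; rewrite jacobian_mk.
apply: (@rank3 _ _ (\matrix_(k < 3, i < 5) match val k, val i with
   | 0, 0 => (2 * p ord0 (o5 0) + 1)^-1
   | 0, 1 => (2 * p ord0 (o5 0) + (p ord0 (o5 3))) / (2 * p ord0 (o5 0) + 1)
   | 0, 2 => (2 * p ord0 (o5 0) + (p ord0 (o5 4))) / (2 * p ord0 (o5 0) + 1)
   | 1, 1 => -1
   | 2, 2 => -1
   | _, _ => 0 end)).
apply/matrixP => k l; rewrite !mxE !big_ord_recl big_ord0 !mxE.
case: k => [[|[|[|//]]] Hk]; case: l => [[|[|[|//]]] Hl]; rewrite /= !mxE /=.
all: by field; try exact c0.
Qed.

Lemma rank2B (p : 'rV[K]_5) : (p ord0 (o5 4)) != 0 -> \rank (Defs.jacobian (mk fes2) p) = 3.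
Proof.
move=> c0; rewrite jacobian_mk.
apply: (@rank3 _ _ (\matrix_(k < 3, i < 5) match val k, val i with
   | 0, 3 => (- (p ord0 (o5 4)))^-1
   | 0, 1 => (p ord0 (o5 0)) / (- (p ord0 (o5 4)))
   | 1, 1 => -1
   | 2, 2 => -1
   | _, _ => 0 end)).
apply/matrixP => k l; rewrite !mxE !big_ord_recl big_ord0 !mxE.
case: k => [[|[|[|//]]] Hk]; case: l => [[|[|[|//]]] Hl]; rewrite /= !mxE /=.
all: by field; try exact c0.
Qed.

Lemma sub2 : submanifold 2 (in_chart (o6 2) (proj_closure (solset K))).
Proof.
move=> p Hp; exists setT, (mk fes2); split.
- exact: openT.
- by [].
- exact: smooth_mk.
- by move=> y _; rewrite in_chartE; exact: QV2_iff.
have hq := (in_chartE _ _).1 Hp (o5 1); rewrite /= in hq; rewrite ?chart_at ?ch2_0 ?ch2_1 ?ch2_3 ?ch2_4 ?ch2_5 in hq.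
have [cz|cn] := eqVneq (2 * p ord0 (o5 0) + 1) 0; last exact: rank2A.
have n3 : (p ord0 (o5 4)) != 0.
  apply/eqP => z3.
  have : (1 : K) = 0.
    by apply: (comb3 (c1 := (2 * p ord0 (o5 0) + 1)) (c2 := -4) (c3 := -4 * (p ord0 (o5 3))) _ cz hq z3); ring.
  by move/eqP; rewrite oner_eq0.
exact: rank2B.
Qed.
Definition fes3 : 'I_3 -> pe K 5 := fun l =>
  match val l with
  | 0 => (PAdd (PAdd (PMul (@PX K 5 (o5 0)) (@PX K 5 (o5 0))) (PMul (@PX K 5 (o5 0)) (@PC K 5 (1)))) (PNeg (PMul (@PX K 5 (o5 4)) (@PX K 5 (o5 1)))))
  | 1 => (PAdd (PAdd (PMul (@PX K 5 (o5 0)) (@PX K 5 (o5 0))) (PMul (@PX K 5 (o5 0)) (@PX K 5 (o5 4)))) (PNeg (PMul (@PX K 5 (o5 2)) (@PC K 5 (1)))))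
  | _ => (PAdd (PAdd (PMul (@PX K 5 (o5 0)) (@PX K 5 (o5 0))) (PMul (@PX K 5 (o5 0)) (@PX K 5 (o5 1)))) (PNeg (PMul (@PC K 5 (1)) (@PX K 5 (o5 3)))))
  end.
Lemma QV3_iff w : QV (chart (o6 3) w) <-> mk fes3 w = 0.
Proof.
rewrite mk3E; split.
  move=> h; split.
  - apply: (comb1 (c1 := 1) _ (h (o5 2))); rewrite /=; rewrite ?chart_at ?ch3_0 ?ch3_1 ?ch3_2 ?ch3_4 ?ch3_5; ring.
  - apply: (comb1 (c1 := 1) _ (h (o5 4))); rewrite /=; rewrite ?chart_at ?ch3_0 ?ch3_1 ?ch3_2 ?ch3_4 ?ch3_5; ring.
  - apply: (comb1 (c1 := 1) _ (h (o5 0))); rewrite /=; rewrite ?chart_at ?ch3_0 ?ch3_1 ?ch3_2 ?ch3_4 ?ch3_5; ring.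
case=> h0 h1 h2; apply: P5.
- apply: (comb1 (c1 := 1) _ h2); rewrite /=; rewrite ?chart_at ?ch3_0 ?ch3_1 ?ch3_2 ?ch3_4 ?ch3_5; ring.
- apply: (comb3 (c1 := (w ord0 (o5 0))) (c2 := - (w ord0 (o5 0))) (c3 := (w ord0 (o5 4))) _ h0 h1 h2); rewrite /=; rewrite ?chart_at ?ch3_0 ?ch3_1 ?ch3_2 ?ch3_4 ?ch3_5; ring.
- apply: (comb1 (c1 := 1) _ h0); rewrite /=; rewrite ?chart_at ?ch3_0 ?ch3_1 ?ch3_2 ?ch3_4 ?ch3_5; ring.
- apply: (comb3 (c1 := (w ord0 (o5 0))) (c2 := (w ord0 (o5 1))) (c3 := - (w ord0 (o5 0))) _ h0 h1 h2); rewrite /=; rewrite ?chart_at ?ch3_0 ?ch3_1 ?ch3_2 ?ch3_4 ?ch3_5; ring.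
- apply: (comb1 (c1 := 1) _ h1); rewrite /=; rewrite ?chart_at ?ch3_0 ?ch3_1 ?ch3_2 ?ch3_4 ?ch3_5; ring.
Qed.

Lemma rank3A (p : 'rV[K]_5) : (2 * p ord0 (o5 0) + 1) != 0 -> \rank (Defs.jacobian (mk fes3) p) = 3.
Proof.
move=> c0; rewrite jacobian_mk.
apply: (@rank3 _ _ (\matrix_(k < 3, i < 5) match val k, val i with
   | 0, 0 => (2 * p ord0 (o5 0) + 1)^-1
   | 0, 2 => (2 * p ord0 (o5 0) + (p ord0 (o5 4))) / (2 * p ord0 (o5 0) + 1)
   | 0, 3 => (2 * p ord0 (o5 0) + (p ord0 (o5 1))) / (2 * p ord0 (o5 0) + 1)
   | 1, 2 => -1
   | 2, 3 => -1
   | _, _ => 0 end)).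
apply/matrixP => k l; rewrite !mxE !big_ord_recl big_ord0 !mxE.
case: k => [[|[|[|//]]] Hk]; case: l => [[|[|[|//]]] Hl]; rewrite /= !mxE /=.
all: by field; try exact c0.
Qed.

Lemma rank3B (p : 'rV[K]_5) : (p ord0 (o5 1)) != 0 -> \rank (Defs.jacobian (mk fes3) p) = 3.
Proof.
move=> c0; rewrite jacobian_mk.
apply: (@rank3 _ _ (\matrix_(k < 3, i < 5) match val k, val i with
   | 0, 4 => (- (p ord0 (o5 1)))^-1
   | 0, 2 => (p ord0 (o5 0)) / (- (p ord0 (o5 1)))
   | 1, 2 => -1
   | 2, 3 => -1
   | _, _ => 0 end)).
apply/matrixP => k l; rewrite !mxE !big_ord_recl big_ord0 !mxE.
case: k => [[|[|[|//]]] Hk]; case: l => [[|[|[|//]]] Hl]; rewrite /= !mxE /=.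
all: by field; try exact c0.
Qed.

Lemma sub3 : submanifold 2 (in_chart (o6 3) (proj_closure (solset K))).
Proof.
move=> p Hp; exists setT, (mk fes3); split.
- exact: openT.
- by [].
- exact: smooth_mk.
- by move=> y _; rewrite in_chartE; exact: QV3_iff.
have hq := (in_chartE _ _).1 Hp (o5 2); rewrite /= in hq; rewrite ?chart_at ?ch3_0 ?ch3_1 ?ch3_2 ?ch3_4 ?ch3_5 in hq.
have [cz|cn] := eqVneq (2 * p ord0 (o5 0) + 1) 0; last exact: rank3A.
have n3 : (p ord0 (o5 1)) != 0.
  apply/eqP => z3.
  have : (1 : K) = 0.
    by apply: (comb3 (c1 := (2 * p ord0 (o5 0) + 1)) (c2 := -4) (c3 := -4 * (p ord0 (o5 4))) _ cz hq z3); ring.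
  by move/eqP; rewrite oner_eq0.
exact: rank3B.
Qed.
Definition fes4 : 'I_3 -> pe K 5 := fun l =>
  match val l with
  | 0 => (PAdd (PAdd (PMul (@PX K 5 (o5 0)) (@PX K 5 (o5 0))) (PMul (@PX K 5 (o5 0)) (@PC K 5 (1)))) (PNeg (PMul (@PX K 5 (o5 1)) (@PX K 5 (o5 2)))))
  | 1 => (PAdd (PAdd (PMul (@PX K 5 (o5 0)) (@PX K 5 (o5 0))) (PMul (@PX K 5 (o5 0)) (@PX K 5 (o5 1)))) (PNeg (PMul (@PX K 5 (o5 3)) (@PC K 5 (1)))))
  | _ => (PAdd (PAdd (PMul (@PX K 5 (o5 0)) (@PX K 5 (o5 0))) (PMul (@PX K 5 (o5 0)) (@PX K 5 (o5 2)))) (PNeg (PMul (@PC K 5 (1)) (@PX K 5 (o5 4)))))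
  end.
Lemma QV4_iff w : QV (chart (o6 4) w) <-> mk fes4 w = 0.
Proof.
rewrite mk3E; split.
  move=> h; split.
  - apply: (comb1 (c1 := 1) _ (h (o5 3))); rewrite /=; rewrite ?chart_at ?ch4_0 ?ch4_1 ?ch4_2 ?ch4_3 ?ch4_5; ring.
  - apply: (comb1 (c1 := 1) _ (h (o5 0))); rewrite /=; rewrite ?chart_at ?ch4_0 ?ch4_1 ?ch4_2 ?ch4_3 ?ch4_5; ring.
  - apply: (comb1 (c1 := 1) _ (h (o5 1))); rewrite /=; rewrite ?chart_at ?ch4_0 ?ch4_1 ?ch4_2 ?ch4_3 ?ch4_5; ring.
case=> h0 h1 h2; apply: P5.
- apply: (comb1 (c1 := 1) _ h1); rewrite /=; rewrite ?chart_at ?ch4_0 ?ch4_1 ?ch4_2 ?ch4_3 ?ch4_5; ring.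
- apply: (comb1 (c1 := 1) _ h2); rewrite /=; rewrite ?chart_at ?ch4_0 ?ch4_1 ?ch4_2 ?ch4_3 ?ch4_5; ring.
- apply: (comb3 (c1 := (w ord0 (o5 0))) (c2 := - (w ord0 (o5 0))) (c3 := (w ord0 (o5 1))) _ h0 h1 h2); rewrite /=; rewrite ?chart_at ?ch4_0 ?ch4_1 ?ch4_2 ?ch4_3 ?ch4_5; ring.
- apply: (comb1 (c1 := 1) _ h0); rewrite /=; rewrite ?chart_at ?ch4_0 ?ch4_1 ?ch4_2 ?ch4_3 ?ch4_5; ring.
- apply: (comb3 (c1 := (w ord0 (o5 0))) (c2 := (w ord0 (o5 2))) (c3 := - (w ord0 (o5 0))) _ h0 h1 h2); rewrite /=; rewrite ?chart_at ?ch4_0 ?ch4_1 ?ch4_2 ?ch4_3 ?ch4_5; ring.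
Qed.

Lemma rank4A (p : 'rV[K]_5) : (2 * p ord0 (o5 0) + 1) != 0 -> \rank (Defs.jacobian (mk fes4) p) = 3.
Proof.
move=> c0; rewrite jacobian_mk.
apply: (@rank3 _ _ (\matrix_(k < 3, i < 5) match val k, val i with
   | 0, 0 => (2 * p ord0 (o5 0) + 1)^-1
   | 0, 3 => (2 * p ord0 (o5 0) + (p ord0 (o5 1))) / (2 * p ord0 (o5 0) + 1)
   | 0, 4 => (2 * p ord0 (o5 0) + (p ord0 (o5 2))) / (2 * p ord0 (o5 0) + 1)
   | 1, 3 => -1
   | 2, 4 => -1
   | _, _ => 0 end)).
apply/matrixP => k l; rewrite !mxE !big_ord_recl big_ord0 !mxE.
case: k => [[|[|[|//]]] Hk]; case: l => [[|[|[|//]]] Hl]; rewrite /= !mxE /=.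
all: by field; try exact c0.
Qed.

Lemma rank4B (p : 'rV[K]_5) : (p ord0 (o5 2)) != 0 -> \rank (Defs.jacobian (mk fes4) p) = 3.
Proof.
move=> c0; rewrite jacobian_mk.
apply: (@rank3 _ _ (\matrix_(k < 3, i < 5) match val k, val i with
   | 0, 1 => (- (p ord0 (o5 2)))^-1
   | 0, 3 => (p ord0 (o5 0)) / (- (p ord0 (o5 2)))
   | 1, 3 => -1
   | 2, 4 => -1
   | _, _ => 0 end)).
apply/matrixP => k l; rewrite !mxE !big_ord_recl big_ord0 !mxE.
case: k => [[|[|[|//]]] Hk]; case: l => [[|[|[|//]]] Hl]; rewrite /= !mxE /=.
all: by field; try exact c0.
Qed.

Lemma sub4 : submanifold 2 (in_chart (o6 4) (proj_closure (solset K))).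
Proof.
move=> p Hp; exists setT, (mk fes4); split.
- exact: openT.
- by [].
- exact: smooth_mk.
- by move=> y _; rewrite in_chartE; exact: QV4_iff.
have hq := (in_chartE _ _).1 Hp (o5 3); rewrite /= in hq; rewrite ?chart_at ?ch4_0 ?ch4_1 ?ch4_2 ?ch4_3 ?ch4_5 in hq.
have [cz|cn] := eqVneq (2 * p ord0 (o5 0) + 1) 0; last exact: rank4A.
have n3 : (p ord0 (o5 2)) != 0.
  apply/eqP => z3.
  have : (1 : K) = 0.
    by apply: (comb3 (c1 := (2 * p ord0 (o5 0) + 1)) (c2 := -4) (c3 := -4 * (p ord0 (o5 1))) _ cz hq z3); ring.
  by move/eqP; rewrite oner_eq0.
exact: rank4B.
Qed.
Definition fes5 : 'I_3 -> pe K 5 := fun l =>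
  match val l with
  | 0 => (PAdd (PAdd (PMul (@PX K 5 (o5 0)) (@PX K 5 (o5 0))) (PMul (@PX K 5 (o5 0)) (@PC K 5 (1)))) (PNeg (PMul (@PX K 5 (o5 2)) (@PX K 5 (o5 3)))))
  | 1 => (PAdd (PAdd (PMul (@PX K 5 (o5 0)) (@PX K 5 (o5 0))) (PMul (@PX K 5 (o5 0)) (@PX K 5 (o5 2)))) (PNeg (PMul (@PX K 5 (o5 4)) (@PC K 5 (1)))))
  | _ => (PAdd (PAdd (PMul (@PX K 5 (o5 0)) (@PX K 5 (o5 0))) (PMul (@PX K 5 (o5 0)) (@PX K 5 (o5 3)))) (PNeg (PMul (@PC K 5 (1)) (@PX K 5 (o5 1)))))
  end.
Lemma QV5_iff w : QV (chart (o6 5) w) <-> mk fes5 w = 0.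
Proof.
rewrite mk3E; split.
  move=> h; split.
  - apply: (comb1 (c1 := 1) _ (h (o5 4))); rewrite /=; rewrite ?chart_at ?ch5_0 ?ch5_1 ?ch5_2 ?ch5_3 ?ch5_4; ring.
  - apply: (comb1 (c1 := 1) _ (h (o5 1))); rewrite /=; rewrite ?chart_at ?ch5_0 ?ch5_1 ?ch5_2 ?ch5_3 ?ch5_4; ring.
  - apply: (comb1 (c1 := 1) _ (h (o5 2))); rewrite /=; rewrite ?chart_at ?ch5_0 ?ch5_1 ?ch5_2 ?ch5_3 ?ch5_4; ring.
case=> h0 h1 h2; apply: P5.
- apply: (comb3 (c1 := (w ord0 (o5 0))) (c2 := (w ord0 (o5 3))) (c3 := - (w ord0 (o5 0))) _ h0 h1 h2); rewrite /=; rewrite ?chart_at ?ch5_0 ?ch5_1 ?ch5_2 ?ch5_3 ?ch5_4; ring.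
- apply: (comb1 (c1 := 1) _ h1); rewrite /=; rewrite ?chart_at ?ch5_0 ?ch5_1 ?ch5_2 ?ch5_3 ?ch5_4; ring.
- apply: (comb1 (c1 := 1) _ h2); rewrite /=; rewrite ?chart_at ?ch5_0 ?ch5_1 ?ch5_2 ?ch5_3 ?ch5_4; ring.
- apply: (comb3 (c1 := (w ord0 (o5 0))) (c2 := - (w ord0 (o5 0))) (c3 := (w ord0 (o5 2))) _ h0 h1 h2); rewrite /=; rewrite ?chart_at ?ch5_0 ?ch5_1 ?ch5_2 ?ch5_3 ?ch5_4; ring.
- apply: (comb1 (c1 := 1) _ h0); rewrite /=; rewrite ?chart_at ?ch5_0 ?ch5_1 ?ch5_2 ?ch5_3 ?ch5_4; ring.
Qed.

Lemma rank5A (p : 'rV[K]_5) : (2 * p ord0 (o5 0) + 1) != 0 -> \rank (Defs.jacobian (mk fes5) p) = 3.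
Proof.
move=> c0; rewrite jacobian_mk.
apply: (@rank3 _ _ (\matrix_(k < 3, i < 5) match val k, val i with
   | 0, 0 => (2 * p ord0 (o5 0) + 1)^-1
   | 0, 4 => (2 * p ord0 (o5 0) + (p ord0 (o5 2))) / (2 * p ord0 (o5 0) + 1)
   | 0, 1 => (2 * p ord0 (o5 0) + (p ord0 (o5 3))) / (2 * p ord0 (o5 0) + 1)
   | 1, 4 => -1
   | 2, 1 => -1
   | _, _ => 0 end)).
apply/matrixP => k l; rewrite !mxE !big_ord_recl big_ord0 !mxE.
case: k => [[|[|[|//]]] Hk]; case: l => [[|[|[|//]]] Hl]; rewrite /= !mxE /=.
all: by field; try exact c0.
Qed.

Lemma rank5B (p : 'rV[K]_5) : (p ord0 (o5 3)) != 0 -> \rank (Defs.jacobian (mk fes5) p) = 3.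
Proof.
move=> c0; rewrite jacobian_mk.
apply: (@rank3 _ _ (\matrix_(k < 3, i < 5) match val k, val i with
   | 0, 2 => (- (p ord0 (o5 3)))^-1
   | 0, 4 => (p ord0 (o5 0)) / (- (p ord0 (o5 3)))
   | 1, 4 => -1
   | 2, 1 => -1
   | _, _ => 0 end)).
apply/matrixP => k l; rewrite !mxE !big_ord_recl big_ord0 !mxE.
case: k => [[|[|[|//]]] Hk]; case: l => [[|[|[|//]]] Hl]; rewrite /= !mxE /=.
all: by field; try exact c0.
Qed.

Lemma sub5 : submanifold 2 (in_chart (o6 5) (proj_closure (solset K))).
Proof.
move=> p Hp; exists setT, (mk fes5); split.
- exact: openT.
- by [].
- exact: smooth_mk.
- by move=> y _; rewrite in_chartE; exact: QV5_iff.
have hq := (in_chartE _ _).1 Hp (o5 4); rewrite /= in hq; rewrite ?chart_at ?ch5_0 ?ch5_1 ?ch5_2 ?ch5_3 ?ch5_4 in hq.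
have [cz|cn] := eqVneq (2 * p ord0 (o5 0) + 1) 0; last exact: rank5A.
have n3 : (p ord0 (o5 3)) != 0.
  apply/eqP => z3.
  have : (1 : K) = 0.
    by apply: (comb3 (c1 := (2 * p ord0 (o5 0) + 1)) (c2 := -4) (c3 := -4 * (p ord0 (o5 2))) _ cz hq z3); ring.
  by move/eqP; rewrite oner_eq0.
exact: rank5B.
Qed.
Definition aes1 : 'I_3 -> pe K 5 := fun l =>
  match val l with
  | 0 => (PAdd (PAdd (@PC K 5 (1)) (@PX K 5 (o5 0))) (PNeg (PMul (@PX K 5 (o5 2)) (@PX K 5 (o5 3)))))
  | 1 => (PAdd (PAdd (@PC K 5 (1)) (@PX K 5 (o5 2))) (PNeg (PMul (@PX K 5 (o5 4)) (@PX K 5 (o5 0)))))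
  | _ => (PAdd (PAdd (@PC K 5 (1)) (@PX K 5 (o5 3))) (PNeg (PMul (@PX K 5 (o5 0)) (@PX K 5 (o5 1)))))
  end.

Lemma rank0_1 (p : 'rV[K]_5) : (p ord0 (o5 0)) != 0 -> \rank (Defs.jacobian (mk aes1) p) = 3.
Proof.
move=> c0; rewrite jacobian_mk.
apply: (@rank3 _ _ (\matrix_(k < 3, i < 5) match val k, val i with
   | 0, 0 => 1
   | 0, 1 => - (p ord0 (o5 1)) / (p ord0 (o5 0))
   | 0, 4 => - (p ord0 (o5 4)) / (p ord0 (o5 0))
   | 1, 4 => - (p ord0 (o5 0))^-1
   | 2, 1 => - (p ord0 (o5 0))^-1
   | _, _ => 0 end)).
apply/matrixP => k l; rewrite !mxE !big_ord_recl big_ord0 !mxE.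
case: k => [[|[|[|//]]] Hk]; case: l => [[|[|[|//]]] Hl]; rewrite /= !mxE /=.
all: by field; try exact c0.
Qed.

Lemma aff1 (p : 'rV[K]_5) : p ord0 (o5 0) != 0 ->
  exists (U : set 'rV[K]_5) (F : 'rV[K]_5 -> 'rV[K]_(5 - 2)),
      [/\ open U, U p, smooth_on U F,
          (forall x, U x -> (solset K x <-> F x = 0)) &
          \rank (Defs.jacobian F p) = (5 - 2)%N].
Proof.
move=> pn; exists [set x | ev (@PX K 5 (o5 0)) x != 0], (mk aes1); split.
- exact: open_nz.
- by [].
- exact: smooth_mk.
- move=> y /= Uy; rewrite /solset /= sysE mk3E; split.
    move=> h; split.
    + apply: (comb1 (c1 := 1) _ (h (o5 0))); rewrite /=; ring.
    + apply: (comb1 (c1 := 1) _ (h (o5 2))); rewrite /=; ring.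
    + apply: (comb1 (c1 := 1) _ (h (o5 3))); rewrite /=; ring.
  case=> h0 h1 h2; apply: P5.
  + apply: (comb1 (c1 := 1) _ h0); rewrite /=; ring.
  + apply: (comb3 (c1 := (y ord0 (o5 0))^-1) (c2 := (y ord0 (o5 3)) / (y ord0 (o5 0))) (c3 := - (y ord0 (o5 0))^-1) _ h0 h1 h2); rewrite /=; by field; try exact Uy.
  + apply: (comb1 (c1 := 1) _ h1); rewrite /=; ring.
  + apply: (comb1 (c1 := 1) _ h2); rewrite /=; ring.
  + apply: (comb3 (c1 := (y ord0 (o5 0))^-1) (c2 := - (y ord0 (o5 0))^-1) (c3 := (y ord0 (o5 2)) / (y ord0 (o5 0))) _ h0 h1 h2); rewrite /=; by field; try exact Uy.
- exact: rank0_1.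
Qed.
Definition aes2 : 'I_3 -> pe K 5 := fun l =>
  match val l with
  | 0 => (PAdd (PAdd (@PC K 5 (1)) (@PX K 5 (o5 1))) (PNeg (PMul (@PX K 5 (o5 3)) (@PX K 5 (o5 4)))))
  | 1 => (PAdd (PAdd (@PC K 5 (1)) (@PX K 5 (o5 3))) (PNeg (PMul (@PX K 5 (o5 0)) (@PX K 5 (o5 1)))))
  | _ => (PAdd (PAdd (@PC K 5 (1)) (@PX K 5 (o5 4))) (PNeg (PMul (@PX K 5 (o5 1)) (@PX K 5 (o5 2)))))
  end.

Lemma rank0_2 (p : 'rV[K]_5) : (p ord0 (o5 1)) != 0 -> \rank (Defs.jacobian (mk aes2) p) = 3.
Proof.
move=> c0; rewrite jacobian_mk.
apply: (@rank3 _ _ (\matrix_(k < 3, i < 5) match val k, val i with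
   | 0, 1 => 1
   | 0, 2 => - (p ord0 (o5 2)) / (p ord0 (o5 1))
   | 0, 0 => - (p ord0 (o5 0)) / (p ord0 (o5 1))
   | 1, 0 => - (p ord0 (o5 1))^-1
   | 2, 2 => - (p ord0 (o5 1))^-1
   | _, _ => 0 end)).
apply/matrixP => k l; rewrite !mxE !big_ord_recl big_ord0 !mxE.
case: k => [[|[|[|//]]] Hk]; case: l => [[|[|[|//]]] Hl]; rewrite /= !mxE /=.
all: by field; try exact c0.
Qed.

Lemma aff2 (p : 'rV[K]_5) : p ord0 (o5 1) != 0 ->
  exists (U : set 'rV[K]_5) (F : 'rV[K]_5 -> 'rV[K]_(5 - 2)),
      [/\ open U, U p, smooth_on U F,
          (forall x, U x -> (solset K x <-> F x = 0)) &
          \rank (Defs.jacobian F p) = (5 - 2)%N].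
Proof.
move=> pn; exists [set x | ev (@PX K 5 (o5 1)) x != 0], (mk aes2); split.
- exact: open_nz.
- by [].
- exact: smooth_mk.
- move=> y /= Uy; rewrite /solset /= sysE mk3E; split.
    move=> h; split.
    + apply: (comb1 (c1 := 1) _ (h (o5 1))); rewrite /=; ring.
    + apply: (comb1 (c1 := 1) _ (h (o5 3))); rewrite /=; ring.
    + apply: (comb1 (c1 := 1) _ (h (o5 4))); rewrite /=; ring.
  case=> h0 h1 h2; apply: P5.
  + apply: (comb3 (c1 := (y ord0 (o5 1))^-1) (c2 := - (y ord0 (o5 1))^-1) (c3 := (y ord0 (o5 3)) / (y ord0 (o5 1))) _ h0 h1 h2); rewrite /=; by field; try exact Uy.
  + apply: (comb1 (c1 := 1) _ h0); rewrite /=; ring.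
  + apply: (comb3 (c1 := (y ord0 (o5 1))^-1) (c2 := (y ord0 (o5 4)) / (y ord0 (o5 1))) (c3 := - (y ord0 (o5 1))^-1) _ h0 h1 h2); rewrite /=; by field; try exact Uy.
  + apply: (comb1 (c1 := 1) _ h1); rewrite /=; ring.
  + apply: (comb1 (c1 := 1) _ h2); rewrite /=; ring.
- exact: rank0_2.
Qed.
Definition aes3 : 'I_3 -> pe K 5 := fun l =>
  match val l with
  | 0 => (PAdd (PAdd (@PC K 5 (1)) (@PX K 5 (o5 2))) (PNeg (PMul (@PX K 5 (o5 4)) (@PX K 5 (o5 0)))))
  | 1 => (PAdd (PAdd (@PC K 5 (1)) (@PX K 5 (o5 4))) (PNeg (PMul (@PX K 5 (o5 1)) (@PX K 5 (o5 2)))))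
  | _ => (PAdd (PAdd (@PC K 5 (1)) (@PX K 5 (o5 0))) (PNeg (PMul (@PX K 5 (o5 2)) (@PX K 5 (o5 3)))))
  end.

Lemma rank0_3 (p : 'rV[K]_5) : (p ord0 (o5 2)) != 0 -> \rank (Defs.jacobian (mk aes3) p) = 3.
Proof.
move=> c0; rewrite jacobian_mk.
apply: (@rank3 _ _ (\matrix_(k < 3, i < 5) match val k, val i with
   | 0, 2 => 1
   | 0, 3 => - (p ord0 (o5 3)) / (p ord0 (o5 2))
   | 0, 1 => - (p ord0 (o5 1)) / (p ord0 (o5 2))
   | 1, 1 => - (p ord0 (o5 2))^-1
   | 2, 3 => - (p ord0 (o5 2))^-1
   | _, _ => 0 end)).
apply/matrixP => k l; rewrite !mxE !big_ord_recl big_ord0 !mxE.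
case: k => [[|[|[|//]]] Hk]; case: l => [[|[|[|//]]] Hl]; rewrite /= !mxE /=.
all: by field; try exact c0.
Qed.

Lemma aff3 (p : 'rV[K]_5) : p ord0 (o5 2) != 0 ->
  exists (U : set 'rV[K]_5) (F : 'rV[K]_5 -> 'rV[K]_(5 - 2)),
      [/\ open U, U p, smooth_on U F,
          (forall x, U x -> (solset K x <-> F x = 0)) &
          \rank (Defs.jacobian F p) = (5 - 2)%N].
Proof.
move=> pn; exists [set x | ev (@PX K 5 (o5 2)) x != 0], (mk aes3); split.
- exact: open_nz.
- by [].
- exact: smooth_mk.
- move=> y /= Uy; rewrite /solset /= sysE mk3E; split.
    move=> h; split.
    + apply: (comb1 (c1 := 1) _ (h (o5 2))); rewrite /=; ring.
    + apply: (comb1 (c1 := 1) _ (h (o5 4))); rewrite /=; ring.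
    + apply: (comb1 (c1 := 1) _ (h (o5 0))); rewrite /=; ring.
  case=> h0 h1 h2; apply: P5.
  + apply: (comb1 (c1 := 1) _ h2); rewrite /=; ring.
  + apply: (comb3 (c1 := (y ord0 (o5 2))^-1) (c2 := - (y ord0 (o5 2))^-1) (c3 := (y ord0 (o5 4)) / (y ord0 (o5 2))) _ h0 h1 h2); rewrite /=; by field; try exact Uy.
  + apply: (comb1 (c1 := 1) _ h0); rewrite /=; ring.
  + apply: (comb3 (c1 := (y ord0 (o5 2))^-1) (c2 := (y ord0 (o5 0)) / (y ord0 (o5 2))) (c3 := - (y ord0 (o5 2))^-1) _ h0 h1 h2); rewrite /=; by field; try exact Uy.
  + apply: (comb1 (c1 := 1) _ h1); rewrite /=; ring.
- exact: rank0_3.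
Qed.
Definition aes4 : 'I_3 -> pe K 5 := fun l =>
  match val l with
  | 0 => (PAdd (PAdd (@PC K 5 (1)) (@PX K 5 (o5 3))) (PNeg (PMul (@PX K 5 (o5 0)) (@PX K 5 (o5 1)))))
  | 1 => (PAdd (PAdd (@PC K 5 (1)) (@PX K 5 (o5 0))) (PNeg (PMul (@PX K 5 (o5 2)) (@PX K 5 (o5 3)))))
  | _ => (PAdd (PAdd (@PC K 5 (1)) (@PX K 5 (o5 1))) (PNeg (PMul (@PX K 5 (o5 3)) (@PX K 5 (o5 4)))))
  end.

Lemma rank0_4 (p : 'rV[K]_5) : (p ord0 (o5 3)) != 0 -> \rank (Defs.jacobian (mk aes4) p) = 3.
Proof.
move=> c0; rewrite jacobian_mk.
apply: (@rank3 _ _ (\matrix_(k < 3, i < 5) match val k, val i with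
   | 0, 3 => 1
   | 0, 4 => - (p ord0 (o5 4)) / (p ord0 (o5 3))
   | 0, 2 => - (p ord0 (o5 2)) / (p ord0 (o5 3))
   | 1, 2 => - (p ord0 (o5 3))^-1
   | 2, 4 => - (p ord0 (o5 3))^-1
   | _, _ => 0 end)).
apply/matrixP => k l; rewrite !mxE !big_ord_recl big_ord0 !mxE.
case: k => [[|[|[|//]]] Hk]; case: l => [[|[|[|//]]] Hl]; rewrite /= !mxE /=.
all: by field; try exact c0.
Qed.

Lemma aff4 (p : 'rV[K]_5) : p ord0 (o5 3) != 0 ->
  exists (U : set 'rV[K]_5) (F : 'rV[K]_5 -> 'rV[K]_(5 - 2)),
      [/\ open U, U p, smooth_on U F,
          (forall x, U x -> (solset K x <-> F x = 0)) &
          \rank (Defs.jacobian F p) = (5 - 2)%N].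
Proof.
move=> pn; exists [set x | ev (@PX K 5 (o5 3)) x != 0], (mk aes4); split.
- exact: open_nz.
- by [].
- exact: smooth_mk.
- move=> y /= Uy; rewrite /solset /= sysE mk3E; split.
    move=> h; split.
    + apply: (comb1 (c1 := 1) _ (h (o5 3))); rewrite /=; ring.
    + apply: (comb1 (c1 := 1) _ (h (o5 0))); rewrite /=; ring.
    + apply: (comb1 (c1 := 1) _ (h (o5 1))); rewrite /=; ring.
  case=> h0 h1 h2; apply: P5.
  + apply: (comb1 (c1 := 1) _ h1); rewrite /=; ring.
  + apply: (comb1 (c1 := 1) _ h2); rewrite /=; ring.
  + apply: (comb3 (c1 := (y ord0 (o5 3))^-1) (c2 := - (y ord0 (o5 3))^-1) (c3 := (y ord0 (o5 0)) / (y ord0 (o5 3))) _ h0 h1 h2); rewrite /=; by field; try exact Uy.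
  + apply: (comb1 (c1 := 1) _ h0); rewrite /=; ring.
  + apply: (comb3 (c1 := (y ord0 (o5 3))^-1) (c2 := (y ord0 (o5 1)) / (y ord0 (o5 3))) (c3 := - (y ord0 (o5 3))^-1) _ h0 h1 h2); rewrite /=; by field; try exact Uy.
- exact: rank0_4.
Qed.
Definition aes5 : 'I_3 -> pe K 5 := fun l =>
  match val l with
  | 0 => (PAdd (PAdd (@PC K 5 (1)) (@PX K 5 (o5 4))) (PNeg (PMul (@PX K 5 (o5 1)) (@PX K 5 (o5 2)))))
  | 1 => (PAdd (PAdd (@PC K 5 (1)) (@PX K 5 (o5 1))) (PNeg (PMul (@PX K 5 (o5 3)) (@PX K 5 (o5 4)))))
  | _ => (PAdd (PAdd (@PC K 5 (1)) (@PX K 5 (o5 2))) (PNeg (PMul (@PX K 5 (o5 4)) (@PX K 5 (o5 0)))))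
  end.

Lemma rank0_5 (p : 'rV[K]_5) : (p ord0 (o5 4)) != 0 -> \rank (Defs.jacobian (mk aes5) p) = 3.
Proof.
move=> c0; rewrite jacobian_mk.
apply: (@rank3 _ _ (\matrix_(k < 3, i < 5) match val k, val i with
   | 0, 4 => 1
   | 0, 0 => - (p ord0 (o5 0)) / (p ord0 (o5 4))
   | 0, 3 => - (p ord0 (o5 3)) / (p ord0 (o5 4))
   | 1, 3 => - (p ord0 (o5 4))^-1
   | 2, 0 => - (p ord0 (o5 4))^-1
   | _, _ => 0 end)).
apply/matrixP => k l; rewrite !mxE !big_ord_recl big_ord0 !mxE.
case: k => [[|[|[|//]]] Hk]; case: l => [[|[|[|//]]] Hl]; rewrite /= !mxE /=.
all: by field; try exact c0.
Qed.

Lemma aff5 (p : 'rV[K]_5) : p ord0 (o5 4) != 0 ->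
  exists (U : set 'rV[K]_5) (F : 'rV[K]_5 -> 'rV[K]_(5 - 2)),
      [/\ open U, U p, smooth_on U F,
          (forall x, U x -> (solset K x <-> F x = 0)) &
          \rank (Defs.jacobian F p) = (5 - 2)%N].
Proof.
move=> pn; exists [set x | ev (@PX K 5 (o5 4)) x != 0], (mk aes5); split.
- exact: open_nz.
- by [].
- exact: smooth_mk.
- move=> y /= Uy; rewrite /solset /= sysE mk3E; split.
    move=> h; split.
    + apply: (comb1 (c1 := 1) _ (h (o5 4))); rewrite /=; ring.
    + apply: (comb1 (c1 := 1) _ (h (o5 1))); rewrite /=; ring.
    + apply: (comb1 (c1 := 1) _ (h (o5 2))); rewrite /=; ring.
  case=> h0 h1 h2; apply: P5.
  + apply: (comb3 (c1 := (y ord0 (o5 4))^-1) (c2 := (y ord0 (o5 2)) / (y ord0 (o5 4))) (c3 := - (y ord0 (o5 4))^-1) _ h0 h1 h2); rewrite /=; by field; try exact Uy.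
  + apply: (comb1 (c1 := 1) _ h1); rewrite /=; ring.
  + apply: (comb1 (c1 := 1) _ h2); rewrite /=; ring.
  + apply: (comb3 (c1 := (y ord0 (o5 4))^-1) (c2 := - (y ord0 (o5 4))^-1) (c3 := (y ord0 (o5 1)) / (y ord0 (o5 4))) _ h0 h1 h2); rewrite /=; by field; try exact Uy.
  + apply: (comb1 (c1 := 1) _ h0); rewrite /=; ring.
- exact: rank0_5.
Qed.

Lemma sub0 : submanifold 2 (solset K).
Proof.
move=> p Hp; have hs := (sysE p).1 Hp.
have [z1|n1] := eqVneq (p ord0 (o5 0)) 0; last exact: aff1.
have [z2|n2] := eqVneq (p ord0 (o5 1)) 0; last exact: aff2.
have [z3|n3] := eqVneq (p ord0 (o5 2)) 0; last exact: aff3.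
have [z4|n4] := eqVneq (p ord0 (o5 3)) 0; last exact: aff4.
have [z5|n5] := eqVneq (p ord0 (o5 4)) 0; last exact: aff5.
have := hs (o5 0); rewrite /= z1 z3 z4 mul0r addr0 subr0 => /eqP; by rewrite oner_eq0.
Qed.

Lemma chart0E : in_chart (o6 0) (proj_closure (solset K)) = solset K.
Proof. by apply/seteqP; split => w /=; rewrite in_chartE QV_chart0 -sysE. Qed.

Lemma proj_sub : proj_submanifold 2 (proj_closure (solset K)).
Proof.
apply: P6; [rewrite chart0E; exact: sub0|exact: sub1|exact: sub2|exact: sub3|exact: sub4|exact: sub5].
Qed.

Lemma sphere_closed : closed [set v : 'rV[K]_6 | `|v| = 1].
Proof.
have -> : [set v : 'rV[K]_6 | `|v| = 1] = (fun v : 'rV[K]_6 => `|v|) @^-1` [set 1] by [].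
apply: preimage_closed; last first.
  apply: accessible_closed_set1; apply: hausdorff_accessible; exact: norm_hausdorff.
by move=> x _; exact: norm_continuous.
Qed.

Lemma proj_compact_of (B : set 'rV[K]_6) : compact B -> [set v : 'rV[K]_6 | `|v| = 1] `<=` B ->
  proj_compact (proj_closure (solset K)).
Proof.
move=> cB sB; rewrite /proj_compact.
have -> : [set v | proj_closure (solset K) v /\ `|v| = 1] = [set v | QV v] `&` [set v | `|v| = 1].
  apply/seteqP; split => v /=; rewrite projE; first by case=> -[].
  case=> h n1; split => //; split => //; apply/eqP => v0; move: n1; rewrite v0 normr0 => /eqP.
  by rewrite eq_sym oner_eq0.
apply: (subclosed_compact _ cB); first exact: closedI QV_closed sphere_closed.
by move=> v [_ /sB].
Qed.
End Main.
Lemma entry_le (K : numFieldType) m n (v : 'M[K]_(m,n)) i j : `|v i j| <= `|v|.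
Proof.
have H : forall e, `|v| < e -> `|v i j| < e.
  move=> e ve.
  have : ball (0 : 'M[K]_(m,n)) e v by rewrite -ball_normE /ball_ /= sub0r normrN.
  by rewrite /ball /= /mx_ball => -[_ /(_ i j)]; rewrite /ball /= !mxE sub0r normrN.
move: H; case: (real_leP (normr_real (v i j)) (normr_real v)) => // lt H.
by have := H _ lt; rewrite ltxx.
Qed.
Section Cx.
Variable R : realType.
Local Open Scope complex_scope.
Definition CC : numFieldType := R[i].
Definition fC (u : 'rV[R]_2) : CC := (u ord0 (@Ordinal 2 0 isT))%:C + 'i * (u ord0 (@Ordinal 2 1 isT))%:C.

Lemma realC_cont : continuous (fun x : R => x%:C : CC).
Proof.
move=> x; apply/cvgrPdist_lt => e e0.
have e0' : 0 < complex.Re e by move: e0; rewrite ltcE => /andP[].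
have eIm : complex.Im e = 0 by move: e0; rewrite ltcE => /andP[/eqP ->].
have H := (@cvgrPdist_lt _ _ _ (nbhs x) _ (fun y : R => y) x).1 (@cvg_id _ _) _ e0'.
near=> y.
have hy : `|x - y| < complex.Re e by near: y; exact: H.
rewrite -rmorphB normc_def /= expr0n /= addr0 sqrtr_sqr.
rewrite ltcE /= eIm eqxx /=; exact: hy.
Unshelve. all: by end_near.
Qed.

Lemma fC_cont : continuous fC.
Proof.
have -> : fC = ((fun x : R => x%:C : CC) \o (fun u : 'rV[R]_2 => u ord0 (@Ordinal 2 0 isT))) + ('i \*: ((fun x : R => x%:C : CC) \o (fun u : 'rV[R]_2 => u ord0 (@Ordinal 2 1 isT)))).
  by apply: funext => u.
move=> u; apply: continuousD.
  apply: continuous_comp; [exact: coord_continuous | exact: realC_cont].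
apply: continuousZl_tmp.
apply: continuous_comp; [exact: coord_continuous | exact: realC_cont].
Qed.
Definition RK : numFieldType := R.
Definition Sq : set 'rV[R]_2 := [set u | forall i, `[-1, 1]%classic (u ord0 i)].
Lemma Sq_compact : compact Sq.
Proof.
have t1 : compact (`[-1, 1]%classic : set RK) by exact: segment_compact.
have cB := @rV_compact _ 2 (fun=> (`[-1, 1]%classic : set RK)) (fun=> t1).
exact cB.
Qed.

Lemma D_compact : compact (fC @` Sq).
Proof. apply: continuous_compact; last exact: Sq_compact. apply: continuous_subspaceT => x; exact: fC_cont. Qed.

Lemma compact_C : proj_compact (proj_closure (solset CC)).
Proof.
apply: (@proj_compact_of _ [set v : 'rV[CC]_6 | forall i, (fC @` Sq) (v ord0 i)]).
  have cB := @rV_compact _ 6 (fun=> fC @` Sq) (fun=> D_compact). exact cB.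
move=> v /= n1 i.
have := entry_le v ord0 i; rewrite n1 => h.
set z := v ord0 i in h *.
have hs : Num.sqrt (complex.Re z ^+ 2 + complex.Im z ^+ 2) <= 1.
  by move: h; rewrite normc_def -[1 : CC]/(1%:C) lecR.
exists (\row_(j < 2) (if val j == 0%N then complex.Re z else complex.Im z)).
  move=> j; rewrite /= in_itv /= -ler_norml mxE.
  case: ifP => _.
    apply: le_trans hs; rewrite -sqrtr_sqr; apply: ler_wsqrtr; rewrite lerDl; exact: sqr_ge0.
  apply: le_trans hs; rewrite -sqrtr_sqr; apply: ler_wsqrtr; rewrite lerDr; exact: sqr_ge0.
by rewrite /fC !mxE /= [RHS]complexE.
Qed.
End Cx.

Lemma compact_R (R : realType) : proj_compact (proj_closure (solset R)).
Proof.
pose K : numFieldType := R.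
have t1 : compact (`[-1, 1]%classic : set K) by exact: segment_compact.
have cB := @rV_compact _ 6 (fun=> (`[-1, 1]%classic : set K)) (fun=> t1).
apply: (@proj_compact_of K _ cB).
move=> v /= n1 i.
have := entry_le v ord0 i; rewrite n1 => h.
by rewrite in_itv /= -ler_norml.
Qed.

Theorem theorem2p1 (R : realType) :
  [/\ submanifold 2 (solset R),
      proj_submanifold 2 (proj_closure (solset R)),
      proj_compact (proj_closure (solset R)),
      proj_submanifold 2 (proj_closure (solset (complex R))) &
      proj_compact (proj_closure (solset (complex R)))].
Proof.
split; [exact: sub0 | exact: proj_sub | exact: compact_R | exact: proj_sub | exact: compact_C].
Qed.
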